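(* Let $\omega$ be a primitive cube root of unity and assume $\alpha_1=\alpha_3=\alpha_4$. Let $(y(t),z(t))$ be the unique solution of the system (H), holomorphic near $t=-\omega^2$, with $y(-\omega^2)=-\omega^2$ and $z(-\omega^2)=\frac{2\omega+1}{3}\alpha_2$. Then $$y(t)=-\omega^2+(1-\alpha_0)(t+\omega^2)+\tfrac{1+2\omega}{3}\alpha_0(1-\alpha_0)(t+\omega^2)^2+O((t+\omega^2)^3),\quad z(t)=\tfrac{2\omega+1}{3}\alpha_2-\tfrac{\alpha_2}{3}(1-\alpha_0)(t+\omega^2)+O((t+\omega^2)^2),$$ and this solution is invariant under $\sigma_2\circ\sigma_1$: $$y\Big(\frac1{1-t}\Big)=\frac{1}{1-y(t)},\qquad z\Big(\frac1{1-t}\Big)=-(1-y(t))\big\{-z(t)(1-y(t))+\alpha_2\big\}.$$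
   Context: Fix complex parameters $\alpha_0,\dots,\alpha_4$ with $\alpha_0+\alpha_1+2\alpha_2+\alpha_3+\alpha_4=1$. The system (H) is $$t(t-1)\frac{dy}{dt}=2y(y-1)(y-t)z-(\alpha_0-1)y(y-1)-\alpha_3y(y-t)-\alpha_4(y-1)(y-t),$$ $$t(t-1)\frac{dz}{dt}=-\big(y(y-1)+(y-1)(y-t)+y(y-t)\big)z^2+\big((2y-1)(\alpha_0-1)+(2y-t)\alpha_3+(2y-t-1)\alpha_4\big)z-(\alpha_1+\alpha_2)\alpha_2.$$ The transformation $\sigma_2\circ\sigma_1$ is $t\mapsto\frac1{1-t}$, $y\mapsto\frac1{1-y}$, $z\mapsto-(1-y)(-z(1-y)+\alpha_2)$, with parameters $(\alpha_1,\alpha_3,\alpha_4)$ permuted cyclically; when $\alpha_1=\alpha_3=\alpha_4$ it maps solutions of (H) to solutions of (H). *)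

(* Defs.v *)
From Stdlib Require Import Reals.
From Coquelicot Require Import Coquelicot.

Open Scope C_scope.

Definition Cderiv (f : C -> C) (z l : C) : Prop :=
  @is_derive C_AbsRing C_NormedModule f z l.

(* Right-hand sides of the system (H), multiplied out by t(t-1). *)
Definition H_rhs_y (a0 a2 a3 a4 t y z : C) : C :=
  2 * y * (y - 1) * (y - t) * z - (a0 - 1) * y * (y - 1)
  - a3 * y * (y - t) - a4 * (y - 1) * (y - t).

Definition H_rhs_z (a0 a1 a2 a3 a4 t y z : C) : C :=
  - (y * (y - 1) + (y - 1) * (y - t) + y * (y - t)) * z * z
  + ((2 * y - 1) * (a0 - 1) + (2 * y - t) * a3 + (2 * y - t - 1) * a4) * z
  - (a1 + a2) * a2.

Definition solves_H_on (a0 a1 a2 a3 a4 : C) (y z : C -> C) (t0 : C) (r : R) : Prop :=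
  forall t : C, (Cmod (t - t0) < r)%R ->
    exists dy dz : C,
      Cderiv y t dy /\ Cderiv z t dz /\
      t * (t - 1) * dy = H_rhs_y a0 a2 a3 a4 t (y t) (z t) /\
      t * (t - 1) * dz = H_rhs_z a0 a1 a2 a3 a4 t (y t) (z t).

(* Main.v *)
Require Import Defs.
From Stdlib Require Import Reals Lra Lia Classical ClassicalEpsilon.
From Coquelicot Require Import Coquelicot.
Open Scope C_scope.

Lemma Cderiv_iff (f : C -> C) (x l : C) :
  Cderiv f x l <->
  (forall eps : R, (0 < eps)%R -> exists delta : R, (0 < delta)%R /\
     forall y, (Cmod (y - x) < delta)%R ->
       (Cmod (f y - f x - l * (y - x)) <= eps * Cmod (y - x))%R).
Proof.
  split.
  - intros [_ H] eps Heps.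
    specialize (H x).
    match type of H with ?A -> _ => assert (Hx : A) end.
    { intros P [e He]. exists e. intros y Hy. apply He. exact Hy. }
    destruct (H Hx (mkposreal eps Heps)) as [e He].
    exists e. split; [apply cond_pos|].
    intros y Hy.
    specialize (He y Hy).
    assert (E : f y - f x - l * (y - x) = minus (minus (f y) (f x)) (scal (minus y x) l)).
    { change (minus (minus (f y) (f x)) (scal (minus y x) l)) with (f y - f x - (y - x) * l). ring. }
    rewrite E. exact He.
  - intros H. split.
    + apply is_linear_scal_l.
    + intros x' Hx'. apply (@is_filter_lim_locally_unique C_AbsRing (AbsRing_NormedModule C_AbsRing)) in Hx'. subst x'.
      intros eps. destruct (H eps (cond_pos eps)) as [d [Hd Hd']].
      exists (mkposreal _ Hd). intros y Hy.
      assert (E : f y - f x - l * (y - x) = minus (minus (f y) (f x)) (scal (minus y x) l)).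
      { change (minus (minus (f y) (f x)) (scal (minus y x) l)) with (f y - f x - (y - x) * l). ring. }
      generalize (Hd' y Hy). rewrite E. exact (fun h => h).
Qed.

Definition CderivK (f : C -> C) (x l : C) : Prop :=
  @is_derive C_AbsRing (AbsRing_NormedModule C_AbsRing) f x l.

Lemma CderivK_iff (f : C -> C) (x l : C) :
  CderivK f x l <->
  (forall eps : R, (0 < eps)%R -> exists delta : R, (0 < delta)%R /\
     forall y, (Cmod (y - x) < delta)%R ->
       (Cmod (f y - f x - l * (y - x)) <= eps * Cmod (y - x))%R).
Proof.
  split.
  - intros [_ H] eps Heps.
    specialize (H x).
    match type of H with ?A -> _ => assert (Hx : A) end.
    { intros P [e He]. exists e. intros y Hy. apply He. exact Hy. }
    destruct (H Hx (mkposreal eps Heps)) as [e He].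
    exists e. split; [apply cond_pos|].
    intros y Hy.
    specialize (He y Hy).
    assert (E : f y - f x - l * (y - x) = minus (minus (f y) (f x)) (scal (minus y x) l)).
    { change (minus (minus (f y) (f x)) (scal (minus y x) l)) with (f y - f x - (y - x) * l). ring. }
    rewrite E. exact He.
  - intros H. split.
    + apply is_linear_scal_l.
    + intros x' Hx'. apply (@is_filter_lim_locally_unique C_AbsRing (AbsRing_NormedModule C_AbsRing)) in Hx'. subst x'.
      intros eps. destruct (H eps (cond_pos eps)) as [d [Hd Hd']].
      exists (mkposreal _ Hd). intros y Hy.
      assert (E : f y - f x - l * (y - x) = minus (minus (f y) (f x)) (scal (minus y x) l)).
      { change (minus (minus (f y) (f x)) (scal (minus y x) l)) with (f y - f x - (y - x) * l). ring. }
      generalize (Hd' y Hy). rewrite E. exact (fun h => h).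
Qed.

Lemma Cderiv_K f x l : Cderiv f x l <-> CderivK f x l.
Proof. rewrite Cderiv_iff, CderivK_iff. tauto. Qed.


Lemma Cd_const c x : Cderiv (fun _ => c) x 0.
Proof. exact (is_derive_const c x). Qed.
Lemma Cd_id x : Cderiv (fun t => t) x 1.
Proof. apply Cderiv_K. exact (is_derive_id x). Qed.
Lemma Cd_plus f g x df dg : Cderiv f x df -> Cderiv g x dg ->
  Cderiv (fun t => f t + g t) x (df + dg).
Proof. rewrite !Cderiv_K. intros H1 H2. exact (@is_derive_plus C_AbsRing (AbsRing_NormedModule C_AbsRing) f g x df dg H1 H2). Qed.
Lemma Cd_minus f g x df dg : Cderiv f x df -> Cderiv g x dg ->
  Cderiv (fun t => f t - g t) x (df - dg).
Proof. rewrite !Cderiv_K. intros H1 H2. exact (@is_derive_minus C_AbsRing (AbsRing_NormedModule C_AbsRing) f g x df dg H1 H2). Qed.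
Lemma Cd_opp f x df : Cderiv f x df -> Cderiv (fun t => - f t) x (- df).
Proof. rewrite !Cderiv_K. intros H1. exact (@is_derive_opp C_AbsRing (AbsRing_NormedModule C_AbsRing) f x df H1). Qed.
Lemma Cd_mult f g x df dg : Cderiv f x df -> Cderiv g x dg ->
  Cderiv (fun t => f t * g t) x (df * g x + f x * dg).
Proof. rewrite !Cderiv_K. intros H1 H2. exact (is_derive_mult f g x df dg H1 H2 Cmult_comm). Qed.
Lemma Cd_comp f g x df dg : Cderiv f (g x) df -> Cderiv g x dg ->
  Cderiv (fun t => f (g t)) x (dg * df).
Proof. rewrite !Cderiv_K. intros H1 H2. exact (@is_derive_comp C_AbsRing (AbsRing_NormedModule C_AbsRing) f g x df dg H1 H2). Qed.
Lemma Cd_ext_l f x l l' : Cderiv f x l -> l = l' -> Cderiv f x l'.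
Proof. intros H E; subst; exact H. Qed.
Lemma Cd_ext f g x l : (forall t, f t = g t) -> Cderiv f x l -> Cderiv g x l.
Proof.
  intros E H. apply Cderiv_iff. intros eps He.
  destruct (proj1 (Cderiv_iff f x l) H eps He) as [d [Hd H']].
  exists d; split; auto. intros y Hy. rewrite <- !E. auto.
Qed.

Lemma Cderiv_lip f x l : Cderiv f x l -> exists d, (0 < d)%R /\
  forall y, (Cmod (y - x) < d)%R -> (Cmod (f y - f x) <= (Cmod l + 1) * Cmod (y - x))%R.
Proof.
  intros H. destruct (proj1 (Cderiv_iff f x l) H 1%R Rlt_0_1) as [d [Hd H']].
  exists d; split; auto. intros y Hy. specialize (H' y Hy).
  replace (f y - f x) with ((f y - f x - l * (y - x)) + l * (y - x)) by ring.
  eapply Rle_trans; [apply Cmod_triangle|]. rewrite Cmod_mult. lra.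
Qed.

Lemma Cderiv_cont f x l : Cderiv f x l -> forall eps, (0 < eps)%R -> exists d, (0 < d)%R /\
  forall y, (Cmod (y - x) < d)%R -> (Cmod (f y - f x) < eps)%R.
Proof.
  intros H eps He. destruct (Cderiv_lip f x l H) as [d [Hd H']].
  pose proof (Cmod_ge_0 l).
  exists (Rmin d (eps / (Cmod l + 1))). split.
  { apply Rmin_glb_lt; auto. apply Rdiv_lt_0_compat; lra. }
  intros y Hy. eapply Rle_lt_trans. apply H'. eapply Rlt_le_trans; [|apply Rmin_l]; exact Hy.
  assert (Cmod (y - x) < eps / (Cmod l + 1))%R by (eapply Rlt_le_trans; [|apply Rmin_r]; exact Hy).
  apply (Rmult_lt_compat_l (Cmod l + 1)) in H1; [|lra].
  replace ((Cmod l + 1) * (eps / (Cmod l + 1)))%R with eps in H1 by (field; lra). lra.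
Qed.

Lemma Cd_inv f x l : Cderiv f x l -> f x <> 0 ->
  Cderiv (fun t => / f t) x (- l / (f x * f x)).
Proof.
  intros H Hx. apply Cderiv_iff. intros eps He.
  set (a := Cmod (f x)).
  assert (Ha : (0 < a)%R) by (apply Cmod_gt_0; exact Hx).
  pose proof (Cmod_ge_0 l) as Hl.
  destruct (Cderiv_lip f x l H) as [d1 [Hd1 H1]].
  destruct (proj1 (Cderiv_iff f x l) H (eps * a * a / 4)%R) as [d2 [Hd2 H2]].
  { apply Rmult_lt_0_compat; [|lra]. apply Rmult_lt_0_compat; [|lra]. nra. }
  set (d3 := (a / (2 * (Cmod l + 1)))%R).
  set (d4 := (eps * a * a * a / (4 * ((Cmod l + 1) * (Cmod l + 1))))%R).
  assert (Hd3 : (0 < d3)%R) by (unfold d3; apply Rdiv_lt_0_compat; lra).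
  assert (Hd4 : (0 < d4)%R).
  { unfold d4; apply Rdiv_lt_0_compat; [|nra]. repeat apply Rmult_lt_0_compat; lra. }
  exists (Rmin (Rmin d1 d2) (Rmin d3 d4)). split.
  { repeat apply Rmin_glb_lt; auto. }
  intros y Hy.
  assert (Hy1 : (Cmod (y - x) < d1)%R) by (eapply Rlt_le_trans; [exact Hy|]; apply (Rle_trans _ _ _ (Rmin_l _ _)); apply Rmin_l).
  assert (Hy2 : (Cmod (y - x) < d2)%R) by (eapply Rlt_le_trans; [exact Hy|]; apply (Rle_trans _ _ _ (Rmin_l _ _)); apply Rmin_r).
  assert (Hy3 : (Cmod (y - x) < d3)%R) by (eapply Rlt_le_trans; [exact Hy|]; apply (Rle_trans _ _ _ (Rmin_r _ _)); apply Rmin_l).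
  assert (Hy4 : (Cmod (y - x) < d4)%R) by (eapply Rlt_le_trans; [exact Hy|]; apply (Rle_trans _ _ _ (Rmin_r _ _)); apply Rmin_r).
  specialize (H1 y Hy1). specialize (H2 y Hy2).
  set (r := Cmod (y - x)) in *.
  assert (Hr : (0 <= r)%R) by apply Cmod_ge_0.
  assert (Hfy : (a / 2 <= Cmod (f y))%R).
  { assert (Cmod (f x) <= Cmod (f y) + Cmod (f y - f x))%R.
    { replace (f x) with (f y + - (f y - f x)) at 1 by ring.
      eapply Rle_trans; [apply Cmod_triangle|]. rewrite Cmod_opp. lra. }
    assert ((Cmod l + 1) * r <= a / 2)%R.
    { unfold d3 in Hy3. apply Rlt_le.
      apply (Rmult_lt_compat_l (Cmod l + 1)) in Hy3; [|lra].
      replace ((Cmod l + 1) * (a / (2 * (Cmod l + 1))))%R with (a / 2)%R in Hy3 by (field; lra).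
      lra. }
    fold a in H0. lra. }
  assert (Hfy0 : f y <> 0).
  { intro E. rewrite E, Cmod_0 in Hfy. lra. }
  replace (/ f y - / f x - - l / (f x * f x) * (y - x))
    with ((- (f y - f x - l * (y - x)) * f x + l * (y - x) * (f y - f x)) / (f x * f x * f y))
    by (field; split; auto).
  rewrite Cmod_div by (repeat apply Cmult_neq_0; auto).
  rewrite !Cmod_mult. fold a.
  assert (Hnum : (Cmod (- (f y - f x - l * (y - x)) * f x + l * (y - x) * (f y - f x))
     <= eps * a * a / 4 * r * a + Cmod l * r * ((Cmod l + 1) * r))%R).
  { eapply Rle_trans; [apply Cmod_triangle|]. rewrite !Cmod_mult, Cmod_opp. fold a. fold r.
    apply Rplus_le_compat.
    - apply Rmult_le_compat_r; lra.
    - apply Rmult_le_compat_l; [apply Rmult_le_pos; lra | exact H1]. }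
  assert (Hden : (a * a * (a / 2) <= a * a * Cmod (f y))%R).
  { apply Rmult_le_compat_l; [nra | exact Hfy]. }
  apply (Rle_trans _ ((eps * a * a / 4 * r * a + Cmod l * r * ((Cmod l + 1) * r)) / (a * a * (a / 2)))).
  { unfold Rdiv. apply Rmult_le_compat.
    - apply Cmod_ge_0.
    - apply Rlt_le, Rinv_0_lt_compat. assert (0 < Cmod (f y))%R by lra.
      repeat apply Rmult_lt_0_compat; lra.
    - exact Hnum.
    - apply Rinv_le_contravar; [repeat apply Rmult_lt_0_compat; lra| exact Hden]. }
  assert (Hr4 : (Cmod l * ((Cmod l + 1) * r) <= eps * a * a * a / 4)%R).
  { unfold d4 in Hy4.
    apply (Rle_trans _ ((Cmod l + 1) * ((Cmod l + 1) * r))). 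
    { apply Rmult_le_compat_r; [nra| lra]. }
    apply Rlt_le. apply (Rmult_lt_compat_l ((Cmod l + 1) * (Cmod l + 1))) in Hy4; [|nra].
    replace ((Cmod l + 1) * (Cmod l + 1) * (eps * a * a * a / (4 * ((Cmod l + 1) * (Cmod l + 1)))))%R
      with (eps * a * a * a / 4)%R in Hy4 by (field; lra). nra. }
  apply (Rmult_le_reg_r (a * a * (a / 2))); [repeat apply Rmult_lt_0_compat; lra|].
  unfold Rdiv at 1. rewrite Rmult_assoc, Rinv_l, Rmult_1_r by (apply Rgt_not_eq; repeat apply Rmult_lt_0_compat; lra).
  nra.
Qed.


Lemma pow_le_one (x : R) (n : nat) : (0 <= x <= 1)%R -> (x ^ n <= 1)%R.
Proof. intros H. induction n; simpl; [lra|]. nra. Qed.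

Lemma Re_minus (a b : C) : Re (a - b) = (Re a - Re b)%R.
Proof. destruct a, b; simpl; ring. Qed.
Lemma Re_mulR (z : C) (k : R) : Re (z * RtoC k) = (Re z * k)%R.
Proof. destruct z; simpl; ring. Qed.
Lemma Re_le (z : C) : (Re z <= Cmod z)%R.
Proof. pose proof (re_le_Cmod z). pose proof (Rle_abs (Re z)). lra. Qed.
Lemma Re_abs_le (z : C) : (Rabs (Re z) <= Cmod z)%R.
Proof. apply re_le_Cmod. Qed.

Lemma real_deriv (g : C -> C) (t0 h c : C) (s : R) (l : C) :
  Cderiv g (t0 + RtoC s * h) l ->
  derivable_pt_lim (fun s => Re (c * g (t0 + RtoC s * h))) s (Re (c * l * h)).
Proof.
  intros H eps He.
  set (M := (Cmod c * Cmod h + 1)%R).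
  assert (HM : (0 < M)%R) by (unfold M; pose proof (Cmod_ge_0 c); pose proof (Cmod_ge_0 h); nra).
  destruct (proj1 (Cderiv_iff g _ l) H (eps / (2 * M))%R) as [d [Hd H']].
  { apply Rdiv_lt_0_compat; lra. }
  assert (Hd' : (0 < d / (Cmod h + 1))%R) by (apply Rdiv_lt_0_compat; [lra| pose proof (Cmod_ge_0 h); lra]).
  exists (mkposreal _ Hd'). intros k Hk0 Hk. simpl in Hk.
  set (tau := t0 + RtoC s * h).
  set (y := t0 + RtoC (s + k) * h).
  assert (Ey : y - tau = RtoC k * h) by (unfold y, tau; rewrite RtoC_plus; ring).
  assert (Hyk : Cmod (y - tau) = (Rabs k * Cmod h)%R) by (rewrite Ey, Cmod_mult, Cmod_R; reflexivity).
  assert (Hkpos : (0 < Rabs k)%R) by (apply Rabs_pos_lt; exact Hk0).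
  assert (Hy : (Cmod (y - tau) < d)%R).
  { rewrite Hyk. apply (Rmult_lt_compat_r (Cmod h + 1)) in Hk; [|pose proof (Cmod_ge_0 h); lra].
    replace (d / (Cmod h + 1) * (Cmod h + 1))%R with d in Hk by (field; pose proof (Cmod_ge_0 h); lra).
    pose proof (Cmod_ge_0 h). nra. }
  specialize (H' y Hy). fold tau in H'.
  assert (Key : (Re (c * g y) - Re (c * g tau) - Re (c * l * h) * k)%R
               = Re (c * (g y - g tau - l * (y - tau)))).
  { rewrite Ey. rewrite <- Re_mulR, <- !Re_minus. f_equal. ring. }
  replace ((Re (c * g y) - Re (c * g tau)) / k - Re (c * l * h))%R
    with (Re (c * (g y - g tau - l * (y - tau))) / k)%R
    by (rewrite <- Key; field; exact Hk0).
  unfold Rdiv. rewrite Rabs_mult, Rabs_inv.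
  apply (Rle_lt_trans _ (Cmod c * (eps / (2 * M) * (Rabs k * Cmod h)) * / Rabs k)).
  { apply Rmult_le_compat_r; [apply Rlt_le, Rinv_0_lt_compat; lra|].
    eapply Rle_trans; [apply Re_abs_le|]. rewrite Cmod_mult. rewrite <- Hyk.
    apply Rmult_le_compat_l; [apply Cmod_ge_0| exact H']. }
  replace (Cmod c * (eps / (2 * M) * (Rabs k * Cmod h)) * / Rabs k)%R
    with (eps / (2 * M) * (Cmod c * Cmod h))%R by (field; lra).
  assert (Cmod c * Cmod h < M)%R by (unfold M; lra).
  apply (Rlt_le_trans _ (eps / (2 * M) * M)).
  { apply Rmult_lt_compat_l; [apply Rdiv_lt_0_compat; lra| lra]. }
  replace (eps / (2 * M) * M)%R with (eps / 2)%R by (field; lra). lra.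
Qed.

Lemma MVI (g : C -> C) (t0 : C) (d K : R) (n : nat) :
  (0 <= K)%R ->
  (forall tau, (Cmod (tau - t0) < d)%R -> exists l, Cderiv g tau l /\
       (Cmod l <= K * Cmod (tau - t0) ^ n)%R) ->
  forall t, (Cmod (t - t0) < d)%R -> (Cmod (g t - g t0) <= K * Cmod (t - t0) ^ (S n))%R.
Proof.
  intros HK Hd t Ht.
  set (h := t - t0) in *.
  pose proof (Cmod_ge_0 h) as Hh.
  destruct (Ceq_dec (g t - g t0) 0) as [E|E].
  { rewrite E, Cmod_0. apply Rmult_le_pos; auto. apply pow_le; auto. }
  set (D := g t - g t0) in *.
  assert (HD : (0 < Cmod D)%R) by (apply Cmod_gt_0; exact E).
  set (c := Cconj D / RtoC (Cmod D)).
  assert (Hc : Cmod c = 1%R).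
  { unfold c. rewrite Cmod_div, Cmod_conj, Cmod_R, Rabs_pos_eq by (try lra; intro X; apply RtoC_inj in X; lra).
    field. lra. }
  assert (HcD : Re (c * D) = Cmod D).
  { unfold c. replace (Cconj D / RtoC (Cmod D) * D) with ((D * Cconj D) / RtoC (Cmod D)).
    2:{ field. intro X; apply RtoC_inj in X; lra. }
    rewrite <- Cmod2_conj. replace (RtoC (Cmod D ^ 2)) with (RtoC (Cmod D) * RtoC (Cmod D)).
    2:{ rewrite <- RtoC_mult. f_equal. ring. }
    replace (RtoC (Cmod D) * RtoC (Cmod D) / RtoC (Cmod D)) with (RtoC (Cmod D)).
    reflexivity. field. intro X; apply RtoC_inj in X; lra. }
  assert (Hin : forall s : R, (0 <= s <= 1)%R -> (Cmod (t0 + RtoC s * h - t0) < d)%R /\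
              Cmod (t0 + RtoC s * h - t0) = (s * Cmod h)%R).
  { intros s Hs. replace (t0 + RtoC s * h - t0) with (RtoC s * h) by ring.
    rewrite Cmod_mult, Cmod_R, Rabs_pos_eq by lra. split; [|reflexivity].
    apply (Rle_lt_trans _ (Cmod h)); [|exact Ht]. nra. }
  assert (Hex : forall s : R, exists l : C, (0 <= s <= 1)%R ->
      Cderiv g (t0 + RtoC s * h) l /\ (Cmod l <= K * Cmod (t0 + RtoC s * h - t0) ^ n)%R).
  { intros s. destruct (classic (0 <= s <= 1)%R) as [Hs|Hs].
    - destruct (Hd _ (proj1 (Hin s Hs))) as [l Hl]. exists l. intros _. exact Hl.
    - exists 0. intros Hs'. contradiction. }
  set (L := fun s => proj1_sig (constructive_indefinite_description _ (Hex s))).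
  assert (HL : forall s, (0 <= s <= 1)%R -> Cderiv g (t0 + RtoC s * h) (L s) /\
      (Cmod (L s) <= K * Cmod (t0 + RtoC s * h - t0) ^ n)%R).
  { intros s Hs. unfold L. destruct (constructive_indefinite_description _ (Hex s)) as [l Hl]. simpl. auto. }
  destruct (MVT_cor2 (fun s => Re (c * g (t0 + RtoC s * h))) (fun s => Re (c * L s * h)) 0 1 Rlt_0_1)
    as [xi [Hxi Hxi']].
  { intros s Hs. apply real_deriv. apply HL; auto. }
  replace (t0 + RtoC 1 * h) with t in Hxi by (unfold h; ring).
  replace (t0 + RtoC 0 * h) with t0 in Hxi by ring.
  rewrite <- Re_minus in Hxi.
  replace (c * g t - c * g t0) with (c * D) in Hxi by (unfold D; ring).
  rewrite HcD in Hxi. rewrite Hxi.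
  assert (Hxi01 : (0 <= xi <= 1)%R) by lra.
  destruct (HL xi Hxi01) as [_ Hb]. rewrite (proj2 (Hin xi Hxi01)) in Hb.
  replace (1 - 0)%R with 1%R by ring. rewrite Rmult_1_r.
  eapply Rle_trans; [apply Re_le|]. rewrite !Cmod_mult, Hc, Rmult_1_l.
  simpl pow. 
  apply (Rle_trans _ (K * (xi * Cmod h) ^ n * Cmod h)).
  { apply Rmult_le_compat_r; auto. }
  rewrite Rpow_mult_distr.
  assert (xi ^ n <= 1)%R by (apply pow_le_one; lra).
  assert (0 <= Cmod h ^ n)%R by (apply pow_le; auto).
  assert (K * (xi ^ n * Cmod h ^ n) <= K * Cmod h ^ n)%R.
  { apply Rmult_le_compat_l; auto. assert (0 <= xi ^ n)%R by (apply pow_le; lra). nra. }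
  nra.
Qed.


Definition BO (t0 : C) (f : C -> C) (n : nat) : Prop :=
  exists K d : R, (0 <= K)%R /\ (0 < d)%R /\
    forall t, (Cmod (t - t0) < d)%R -> (Cmod (f t) <= K * Cmod (t - t0) ^ n)%R.


Lemma BO_ext_loc (t0 : C) f g n : (exists d, (0 < d)%R /\ forall t, (Cmod (t - t0) < d)%R -> f t = g t) ->
  BO t0 f n -> BO t0 g n.
Proof.
  intros [d0 [Hd0 E]] [K [d [HK [Hd H]]]]. exists K, (Rmin d0 d). repeat split; auto.
  { apply Rmin_glb_lt; auto. }
  intros t Ht. rewrite <- E. apply H.
  - eapply Rlt_le_trans; [exact Ht| apply Rmin_r].
  - eapply Rlt_le_trans; [exact Ht| apply Rmin_l].
Qed.

Lemma BO_ext (t0 : C) f g n : (forall t, f t = g t) -> BO t0 f n -> BO t0 g n.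
Proof. intros E. apply BO_ext_loc. exists 1%R. split; [lra|]. auto. Qed.

Lemma BO_const (t0 : C) c : BO t0 (fun _ => c) 0.
Proof. exists (Cmod c), 1%R. repeat split; [apply Cmod_ge_0|lra|]. intros t _. simpl. lra. Qed.

Lemma BO_id (t0 : C) : BO t0 (fun t => t - t0) 1.
Proof. exists 1%R, 1%R. repeat split; try lra. intros t _. simpl. lra. Qed.

Lemma BO_id0 (t0 : C) : BO t0 (fun t => t) 0.
Proof.
  exists (Cmod t0 + 1)%R, 1%R. repeat split; try lra. pose proof (Cmod_ge_0 t0); lra.
  intros t Ht. simpl. replace t with (t0 + (t - t0)) at 1 by ring.
  eapply Rle_trans; [apply Cmod_triangle|]. lra.
Qed.

Lemma BO_add (t0 : C) f g n : BO t0 f n -> BO t0 g n -> BO t0 (fun t => f t + g t) n.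
Proof.
  intros [K1 [d1 [HK1 [Hd1 H1]]]] [K2 [d2 [HK2 [Hd2 H2]]]].
  exists (K1 + K2)%R, (Rmin d1 d2). repeat split; try lra. apply Rmin_glb_lt; auto.
  intros t Ht.
  specialize (H1 t (Rlt_le_trans _ _ _ Ht (Rmin_l _ _))).
  specialize (H2 t (Rlt_le_trans _ _ _ Ht (Rmin_r _ _))).
  eapply Rle_trans; [apply Cmod_triangle|]. lra.
Qed.

Lemma BO_opp (t0 : C) f n : BO t0 f n -> BO t0 (fun t => - f t) n.
Proof.
  intros [K [d [HK [Hd H]]]]. exists K, d. repeat split; auto.
  intros t Ht. rewrite Cmod_opp. auto.
Qed.

Lemma BO_sub (t0 : C) f g n : BO t0 f n -> BO t0 g n -> BO t0 (fun t => f t - g t) n.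
Proof. intros H1 H2. apply BO_add; auto. apply BO_opp; auto. Qed.

Lemma BO_mul (t0 : C) f g n m : BO t0 f n -> BO t0 g m -> BO t0 (fun t => f t * g t) (n + m).
Proof.
  intros [K1 [d1 [HK1 [Hd1 H1]]]] [K2 [d2 [HK2 [Hd2 H2]]]].
  exists (K1 * K2)%R, (Rmin d1 d2). repeat split; try nra. apply Rmin_glb_lt; auto.
  intros t Ht.
  specialize (H1 t (Rlt_le_trans _ _ _ Ht (Rmin_l _ _))).
  specialize (H2 t (Rlt_le_trans _ _ _ Ht (Rmin_r _ _))).
  rewrite Cmod_mult, pow_add.
  replace (K1 * K2 * (Cmod (t - t0) ^ n * Cmod (t - t0) ^ m))%R
    with ((K1 * Cmod (t - t0) ^ n) * (K2 * Cmod (t - t0) ^ m))%R by ring.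
  apply Rmult_le_compat; auto; apply Cmod_ge_0.
Qed.

Lemma BO0_mul (t0 : C) f g : BO t0 f 0 -> BO t0 g 0 -> BO t0 (fun t => f t * g t) 0.
Proof. intros H1 H2. exact (BO_mul t0 f g 0 0 H1 H2). Qed.

Lemma BO_weaken (t0 : C) f n m : BO t0 f n -> (m <= n)%nat -> BO t0 f m.
Proof.
  intros [K [d [HK [Hd H]]]] Hmn. exists K, (Rmin d 1). repeat split; auto.
  apply Rmin_glb_lt; lra.
  intros t Ht. eapply Rle_trans. apply H. eapply Rlt_le_trans; [exact Ht| apply Rmin_l].
  apply Rmult_le_compat_l; auto.
  assert (Hx : (0 <= Cmod (t - t0) <= 1)%R).
  { split; [apply Cmod_ge_0|]. apply Rlt_le. eapply Rlt_le_trans; [exact Ht| apply Rmin_r]. }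
  replace n with (m + (n - m))%nat by lia. rewrite pow_add.
  pose proof (pow_le_one _ (n - m) Hx). pose proof (pow_le (Cmod (t - t0)) m (proj1 Hx)).
  nra.
Qed.

Lemma BO_of_deriv (t0 : C) g l : Cderiv g t0 l -> BO t0 (fun t => g t - g t0) 1.
Proof.
  intros H. destruct (Cderiv_lip g t0 l H) as [d [Hd H']].
  exists (Cmod l + 1)%R, d. repeat split; auto. pose proof (Cmod_ge_0 l); lra.
  intros t Ht. rewrite pow_1. auto.
Qed.

Lemma BO0_of_deriv (t0 : C) g l : Cderiv g t0 l -> BO t0 g 0.
Proof.
  intros H. apply (BO_ext t0 (fun t => (g t - g t0) + g t0)); [intros; ring|].
  apply BO_add; [|apply BO_const]. apply (BO_weaken t0 _ 1); [|lia].
  eapply BO_of_deriv; eauto.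
Qed.

Lemma nonzero_near (t0 : C) g l : Cderiv g t0 l -> g t0 <> 0 ->
  exists d, (0 < d)%R /\ forall t, (Cmod (t - t0) < d)%R -> (Cmod (g t0) / 2 <= Cmod (g t))%R.
Proof.
  intros H Hn. assert (Ha : (0 < Cmod (g t0))%R) by (apply Cmod_gt_0; auto).
  destruct (Cderiv_cont g t0 l H (Cmod (g t0) / 2)%R) as [d [Hd H']]; [lra|].
  exists d; split; auto. intros t Ht. specialize (H' t Ht).
  assert (Cmod (g t0) <= Cmod (g t) + Cmod (g t - g t0))%R.
  { replace (g t0) with (g t + - (g t - g t0)) at 1 by ring.
    eapply Rle_trans; [apply Cmod_triangle|]. rewrite Cmod_opp. lra. }
  lra.
Qed.

Lemma BO_inv (t0 : C) g l : Cderiv g t0 l -> g t0 <> 0 -> BO t0 (fun t => / g t) 0.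
Proof.
  intros H Hn. assert (Ha : (0 < Cmod (g t0))%R) by (apply Cmod_gt_0; auto).
  destruct (nonzero_near t0 g l H Hn) as [d [Hd H']].
  exists (2 / Cmod (g t0))%R, d. repeat split; auto.
  apply Rlt_le, Rdiv_lt_0_compat; lra.
  intros t Ht. specialize (H' t Ht). simpl. rewrite Rmult_1_r.
  assert (Hgt : g t <> 0) by (intro E; rewrite E, Cmod_0 in H'; lra).
  rewrite Cmod_inv by auto.
  replace (2 / Cmod (g t0))%R with (/ (Cmod (g t0) / 2))%R by (field; lra).
  apply Rinv_le_contravar; lra.
Qed.

Lemma BO_integrate (t0 : C) (g E : C -> C) n : g t0 = 0 ->
  (exists d, (0 < d)%R /\ forall tau, (Cmod (tau - t0) < d)%R -> Cderiv g tau (E tau)) ->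
  BO t0 E n -> BO t0 g (S n).
Proof.
  intros H0 [d1 [Hd1 Hg]] [K [d [HK [Hd H]]]].
  exists K, (Rmin d1 d). repeat split; auto. apply Rmin_glb_lt; auto.
  intros t Ht. assert (Eg : g t = g t - g t0) by (rewrite H0; ring). rewrite Eg.
  apply (MVI g t0 (Rmin d1 d) K n HK); auto.
  intros tau Htau. exists (E tau). split.
  - apply Hg. eapply Rlt_le_trans; [exact Htau| apply Rmin_l].
  - apply H. eapply Rlt_le_trans; [exact Htau| apply Rmin_r].
Qed.



Lemma small_zero (x q : R) : (0 <= x)%R -> (0 <= q < 1)%R -> (forall n, x <= q ^ n)%R -> x = 0%R.
Proof.
  intros Hx Hq H. destruct (Rle_lt_or_eq_dec 0 x Hx) as [Hp|]; [|auto].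
  exfalso. assert (Rabs q < 1)%R by (rewrite Rabs_pos_eq; lra).
  destruct (pow_lt_1_zero q H0 x Hp) as [N HN].
  specialize (HN N (le_n N)). specialize (H N).
  rewrite Rabs_pos_eq in HN by (apply pow_le; lra). lra.
Qed.

Lemma zero_core (u v U V : C -> C) (t0 : C) (d M : R) :
  (0 < d)%R -> (0 <= M)%R ->
  (forall tau, (Cmod (tau - t0) < d)%R ->
     Cderiv u tau (U tau) /\ Cderiv v tau (V tau) /\
     (Cmod (U tau) <= M * (Cmod (u tau) + Cmod (v tau)))%R /\
     (Cmod (V tau) <= M * (Cmod (u tau) + Cmod (v tau)))%R) ->
  u t0 = 0 -> v t0 = 0 ->
  exists d', (0 < d')%R /\ forall t, (Cmod (t - t0) < d')%R -> u t = 0 /\ v t = 0.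
Proof.
  intros Hd HM H Hu0 Hv0.
  assert (E0 : (Cmod (t0 - t0) < d)%R).
  { assert (X : t0 - t0 = 0) by ring. rewrite X, Cmod_0. lra. }
  destruct (H t0 E0) as [Du [Dv _]].
  destruct (Cderiv_cont u t0 _ Du 1%R Rlt_0_1) as [du [Hdu Hu]].
  destruct (Cderiv_cont v t0 _ Dv 1%R Rlt_0_1) as [dv [Hdv Hv]].
  set (d1 := Rmin d (Rmin du dv)).
  assert (Hd1 : (0 < d1)%R) by (unfold d1; repeat apply Rmin_glb_lt; auto).
  assert (Hd1d : (d1 <= d)%R) by apply Rmin_l.
  assert (Hd1u : (d1 <= du)%R) by (unfold d1; eapply Rle_trans; [apply Rmin_r| apply Rmin_l]).
  assert (Hd1v : (d1 <= dv)%R) by (unfold d1; eapply Rle_trans; [apply Rmin_r| apply Rmin_r]).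
  set (N := (2 * M)%R).
  assert (HN : (0 <= N)%R) by (unfold N; lra).
  assert (Claim : forall n t, (Cmod (t - t0) < d1)%R ->
     (Cmod (u t) <= N ^ n * Cmod (t - t0) ^ n)%R /\ (Cmod (v t) <= N ^ n * Cmod (t - t0) ^ n)%R).
  { induction n as [|n IH]; intros t Ht.
    - simpl. rewrite Rmult_1_r.
      specialize (Hu t (Rlt_le_trans _ _ _ Ht Hd1u)). specialize (Hv t (Rlt_le_trans _ _ _ Ht Hd1v)).
      rewrite Hu0 in Hu; rewrite Hv0 in Hv. assert (X1 : u t - 0 = u t) by ring. assert (X2 : v t - 0 = v t) by ring.
      rewrite X1 in Hu. rewrite X2 in Hv. lra.
    - assert (Hder : forall tau, (Cmod (tau - t0) < d1)%R ->
         (Cmod (U tau) <= N ^ S n * Cmod (tau - t0) ^ n)%R /\ (Cmod (V tau) <= N ^ S n * Cmod (tau - t0) ^ n)%R).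
      { intros tau Htau. destruct (H tau (Rlt_le_trans _ _ _ Htau Hd1d)) as [_ [_ [HU HV]]].
        destruct (IH tau Htau) as [I1 I2].
        assert (M * (Cmod (u tau) + Cmod (v tau)) <= N ^ S n * Cmod (tau - t0) ^ n)%R.
        { simpl. unfold N. 
          assert (M * (Cmod (u tau) + Cmod (v tau)) <= M * (2 * (N ^ n * Cmod (tau - t0) ^ n)))%R
            by (apply Rmult_le_compat_l; lra).
          unfold N in H0. lra. }
        split; lra. }
      split.
      + replace (u t) with (u t - u t0) by (rewrite Hu0; ring).
        apply (MVI u t0 d1 (N ^ S n) n); auto. apply pow_le; auto.
        intros tau Htau. exists (U tau). split; [apply (H tau (Rlt_le_trans _ _ _ Htau Hd1d))|].
        apply Hder; auto.
      + replace (v t) with (v t - v t0) by (rewrite Hv0; ring).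
        apply (MVI v t0 d1 (N ^ S n) n); auto. apply pow_le; auto.
        intros tau Htau. exists (V tau). split; [apply (H tau (Rlt_le_trans _ _ _ Htau Hd1d))|].
        apply Hder; auto. }
  exists (Rmin d1 (/ (N + 1))). split.
  { apply Rmin_glb_lt; auto. apply Rinv_0_lt_compat; lra. }
  intros t Ht.
  assert (Ht1 : (Cmod (t - t0) < d1)%R) by (eapply Rlt_le_trans; [exact Ht| apply Rmin_l]).
  assert (Ht2 : (Cmod (t - t0) < / (N + 1))%R) by (eapply Rlt_le_trans; [exact Ht| apply Rmin_r]).
  assert (Hq : (0 <= N * Cmod (t - t0) < 1)%R).
  { pose proof (Cmod_ge_0 (t - t0)). split; [nra|].
    apply (Rmult_lt_compat_l (N + 1)) in Ht2; [|lra].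
    rewrite Rinv_r in Ht2 by lra. nra. }
  split; apply Cmod_eq_0; apply (small_zero _ (N * Cmod (t - t0))); auto; try apply Cmod_ge_0;
    intros n; rewrite Rpow_mult_distr; apply (Claim n t Ht1).
Qed.


Opaque Cderiv.
Ltac bo0 := repeat match goal with
 | |- BO _ (fun _ => ?c) 0 => apply BO_const
 | |- BO _ (fun t => t) 0 => apply BO_id0
 | |- BO _ (Cplus ?a) 0 => apply (BO_add _ (fun _ => a) (fun t => t))
 | |- BO _ (Cmult ?a) 0 => apply (BO0_mul _ (fun _ => a) (fun t => t))
 | |- BO _ (Cminus ?a) 0 => apply (BO_sub _ (fun _ => a) (fun t => t))
 | |- BO _ (fun _ => _ * _) 0 => apply BO0_mul
 | |- BO _ (fun _ => _ + _) _ => apply BO_add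
 | |- BO _ (fun _ => _ - _) _ => apply BO_sub
 | |- BO _ (fun _ => - _) _ => apply BO_opp
 | _ => assumption
 end.

Ltac cdauto := repeat first [ apply Cd_id | apply Cd_const | eapply Cd_mult | eapply Cd_plus
  | eapply Cd_minus | eapply Cd_opp | eassumption ].

Lemma Cd_tt (x : C) : Cderiv (fun t => t * (t - 1)) x (2 * x - 1).
Proof. eapply Cd_ext_l; [cdauto | cbv beta; ring]. Qed.

Lemma inv_tt_near (t0 : C) : t0 * (t0 - 1) <> 0 ->
  exists d, (0 < d)%R /\ forall t, (Cmod (t - t0) < d)%R -> t * (t - 1) <> 0.
Proof.
  intros Hn. destruct (nonzero_near t0 _ _ (Cd_tt t0) Hn) as [d [Hd H]].
  exists d; split; auto. intros t Ht E. specialize (H t Ht). simpl in H. rewrite E, Cmod_0 in H.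
  assert (0 < Cmod (t0 * (t0 - 1)))%R by (apply Cmod_gt_0; auto). lra.
Qed.

Lemma BO_inv_tt (t0 : C) : t0 * (t0 - 1) <> 0 -> BO t0 (fun t => / (t * (t - 1))) 0.
Proof. intros Hn. exact (BO_inv t0 _ _ (Cd_tt t0) Hn). Qed.

Lemma div_back (D x : C) : D <> 0 -> x = D * x * / D.
Proof. intros H. field. exact H. Qed.

Definition FY a0 a2 a3 a4 (y z : C -> C) (t : C) : C :=
  H_rhs_y a0 a2 a3 a4 t (y t) (z t) * / (t * (t - 1)).
Definition FZ a0 a1 a2 a3 a4 (y z : C -> C) (t : C) : C :=
  H_rhs_z a0 a1 a2 a3 a4 t (y t) (z t) * / (t * (t - 1)).

Lemma sol_deriv a0 a1 a2 a3 a4 y z t0 r : (0 < r)%R -> t0 * (t0 - 1) <> 0 ->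
  solves_H_on a0 a1 a2 a3 a4 y z t0 r ->
  exists d, (0 < d)%R /\ (d <= r)%R /\ forall tau, (Cmod (tau - t0) < d)%R ->
    Cderiv y tau (FY a0 a2 a3 a4 y z tau) /\ Cderiv z tau (FZ a0 a1 a2 a3 a4 y z tau).
Proof.
  intros Hr Hn Hs. destruct (inv_tt_near t0 Hn) as [d [Hd Hnz]].
  exists (Rmin r d). split; [apply Rmin_glb_lt; auto|]. split; [apply Rmin_l|].
  intros tau Htau. split.
  - destruct (Hs tau (Rlt_le_trans _ _ _ Htau (Rmin_l _ _))) as [dy [dz [Dy [Dz [Ey Ez]]]]].
    specialize (Hnz tau (Rlt_le_trans _ _ _ Htau (Rmin_r _ _))).
    apply (Cd_ext_l _ _ _ _ Dy). unfold FY. rewrite <- Ey. apply div_back; auto.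
  - destruct (Hs tau (Rlt_le_trans _ _ _ Htau (Rmin_l _ _))) as [dy2 [dz2 [Dy2 [Dz2 [Ey2 Ez2]]]]].
    specialize (Hnz tau (Rlt_le_trans _ _ _ Htau (Rmin_r _ _))).
    apply (Cd_ext_l _ _ _ _ Dz2). unfold FZ. rewrite <- Ez2. apply div_back; auto.
Qed.

Definition Ay (a0 a3 a4 t y1 z1 y2 : C) : C :=
  2 * z1 * (y1 * y1 + y1 * y2 + y2 * y2 - (1 + t) * (y1 + y2) + t)
  - (a0 - 1) * (y1 + y2 - 1) - a3 * (y1 + y2 - t) - a4 * (y1 + y2 - 1 - t).
Definition By (t y2 : C) : C := 2 * y2 * (y2 - 1) * (y2 - t).
Definition Az (a0 a3 a4 t y1 z1 y2 : C) : C :=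
  - (3 * (y1 + y2) - 2 * (1 + t)) * z1 * z1 + 2 * (a0 - 1 + a3 + a4) * z1.
Definition Bz (a0 a3 a4 t y2 z1 z2 : C) : C :=
  - (y2 * (y2 - 1) + (y2 - 1) * (y2 - t) + y2 * (y2 - t)) * (z1 + z2)
  + ((2 * y2 - 1) * (a0 - 1) + (2 * y2 - t) * a3 + (2 * y2 - t - 1) * a4).

Lemma Hy_diff a0 a2 a3 a4 t y1 z1 y2 z2 :
  H_rhs_y a0 a2 a3 a4 t y1 z1 - H_rhs_y a0 a2 a3 a4 t y2 z2
  = (y1 - y2) * Ay a0 a3 a4 t y1 z1 y2 + (z1 - z2) * By t y2.
Proof. unfold H_rhs_y, Ay, By. ring. Qed.

Lemma Hz_diff a0 a1 a2 a3 a4 t y1 z1 y2 z2 :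
  H_rhs_z a0 a1 a2 a3 a4 t y1 z1 - H_rhs_z a0 a1 a2 a3 a4 t y2 z2
  = (y1 - y2) * Az a0 a3 a4 t y1 z1 y2 + (z1 - z2) * Bz a0 a3 a4 t y2 z1 z2.
Proof. unfold H_rhs_z, Az, Bz. ring. Qed.

Lemma lin_inv (A B P Q u v i : C) : A - B = u * P + v * Q -> A * i - B * i = u * (P * i) + v * (Q * i).
Proof. intros H. replace (A * i - B * i) with ((A - B) * i) by ring. rewrite H. ring. Qed.

Lemma BO_extract t0 f : BO t0 f 0 -> exists K d, (0 <= K)%R /\ (0 < d)%R /\
  forall t, (Cmod (t - t0) < d)%R -> (Cmod (f t) <= K)%R.
Proof.
  intros [K [d [HK [Hd H]]]]. exists K, d. repeat split; auto.
  intros t Ht. specialize (H t Ht). simpl in H. lra.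
Qed.

Lemma H_unique a0 a1 a2 a3 a4 y1 z1 y2 z2 t0 r1 r2 :
  (0 < r1)%R -> (0 < r2)%R -> t0 * (t0 - 1) <> 0 ->
  solves_H_on a0 a1 a2 a3 a4 y1 z1 t0 r1 ->
  solves_H_on a0 a1 a2 a3 a4 y2 z2 t0 r2 ->
  y1 t0 = y2 t0 -> z1 t0 = z2 t0 ->
  exists d, (0 < d)%R /\ forall t, (Cmod (t - t0) < d)%R -> y1 t = y2 t /\ z1 t = z2 t.
Proof.
  intros Hr1 Hr2 Hn S1 S2 Ey Ez.
  destruct (sol_deriv _ _ _ _ _ _ _ _ _ Hr1 Hn S1) as [d1 [Hd1 [_ D1]]].
  destruct (sol_deriv _ _ _ _ _ _ _ _ _ Hr2 Hn S2) as [d2 [Hd2 [_ D2]]].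
  assert (E0 : forall d, (0 < d)%R -> (Cmod (t0 - t0) < d)%R).
  { intros d Hd. assert (X : t0 - t0 = 0) by ring. rewrite X, Cmod_0. lra. }
  destruct (D1 t0 (E0 _ Hd1)) as [Dy1 Dz1].
  destruct (D2 t0 (E0 _ Hd2)) as [Dy2 Dz2].
  pose proof (BO0_of_deriv _ _ _ Dy1) as By1.
  pose proof (BO0_of_deriv _ _ _ Dz1) as Bz1.
  pose proof (BO0_of_deriv _ _ _ Dy2) as By2.
  pose proof (BO0_of_deriv _ _ _ Dz2) as Bz2.
  pose proof (BO_inv_tt t0 Hn) as Binv.
  assert (B1 : BO t0 (fun t => Ay a0 a3 a4 t (y1 t) (z1 t) (y2 t) * / (t * (t - 1))) 0)
    by (unfold Ay; bo0).
  assert (B2 : BO t0 (fun t => By t (y2 t) * / (t * (t - 1))) 0)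
    by (unfold By; bo0).
  assert (B3 : BO t0 (fun t => Az a0 a3 a4 t (y1 t) (z1 t) (y2 t) * / (t * (t - 1))) 0)
    by (unfold Az; bo0).
  assert (B4 : BO t0 (fun t => Bz a0 a3 a4 t (y2 t) (z1 t) (z2 t) * / (t * (t - 1))) 0)
    by (unfold Bz; bo0).
  destruct (BO_extract _ _ B1) as [K1 [e1 [HK1 [He1 H1]]]].
  destruct (BO_extract _ _ B2) as [K2 [e2 [HK2 [He2 H2]]]].
  destruct (BO_extract _ _ B3) as [K3 [e3 [HK3 [He3 H3]]]].
  destruct (BO_extract _ _ B4) as [K4 [e4 [HK4 [He4 H4]]]].
  set (d := Rmin (Rmin d1 d2) (Rmin (Rmin e1 e2) (Rmin e3 e4))).
  assert (Hd : (0 < d)%R) by (unfold d; repeat apply Rmin_glb_lt; auto).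
  destruct (zero_core (fun t => y1 t - y2 t) (fun t => z1 t - z2 t)
    (fun t => FY a0 a2 a3 a4 y1 z1 t - FY a0 a2 a3 a4 y2 z2 t)
    (fun t => FZ a0 a1 a2 a3 a4 y1 z1 t - FZ a0 a1 a2 a3 a4 y2 z2 t)
    t0 d (K1 + K2 + K3 + K4) Hd) as [d' [Hd' Z]].
  { lra. }
  { intros tau Htau.
    assert (T1 : (Cmod (tau - t0) < d1)%R) by (eapply Rlt_le_trans; [exact Htau|]; unfold d; eapply Rle_trans; apply Rmin_l).
    assert (T2 : (Cmod (tau - t0) < d2)%R) by (eapply Rlt_le_trans; [exact Htau|]; unfold d; eapply Rle_trans; [apply Rmin_l| apply Rmin_r]).
    assert (T3 : (Cmod (tau - t0) < e1)%R) by (eapply Rlt_le_trans; [exact Htau|]; unfold d; eapply Rle_trans; [apply Rmin_r|]; eapply Rle_trans; apply Rmin_l).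
    assert (T4 : (Cmod (tau - t0) < e2)%R) by (eapply Rlt_le_trans; [exact Htau|]; unfold d; eapply Rle_trans; [apply Rmin_r|]; eapply Rle_trans; [apply Rmin_l| apply Rmin_r]).
    assert (T5 : (Cmod (tau - t0) < e3)%R) by (eapply Rlt_le_trans; [exact Htau|]; unfold d; eapply Rle_trans; [apply Rmin_r|]; eapply Rle_trans; [apply Rmin_r| apply Rmin_l]).
    assert (T6 : (Cmod (tau - t0) < e4)%R) by (eapply Rlt_le_trans; [exact Htau|]; unfold d; eapply Rle_trans; [apply Rmin_r|]; eapply Rle_trans; [apply Rmin_r| apply Rmin_r]).
    destruct (D1 tau T1) as [G1 G2]. destruct (D2 tau T2) as [G3 G4].
    specialize (H1 tau T3). specialize (H2 tau T4). specialize (H3 tau T5). specialize (H4 tau T6).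
    pose proof (Cmod_ge_0 (y1 tau - y2 tau)). pose proof (Cmod_ge_0 (z1 tau - z2 tau)).
    split; [apply Cd_minus; auto|]. split; [apply Cd_minus; auto|]. split.
    - unfold FY. 
      replace (H_rhs_y a0 a2 a3 a4 tau (y1 tau) (z1 tau) * / (tau * (tau - 1)) -
               H_rhs_y a0 a2 a3 a4 tau (y2 tau) (z2 tau) * / (tau * (tau - 1)))
        with ((y1 tau - y2 tau) * (Ay a0 a3 a4 tau (y1 tau) (z1 tau) (y2 tau) * / (tau * (tau - 1)))
            + (z1 tau - z2 tau) * (By tau (y2 tau) * / (tau * (tau - 1)))).
      2:{ symmetry; apply lin_inv; apply Hy_diff. }
      eapply Rle_trans; [apply Cmod_triangle|]. rewrite !Cmod_mult.
      assert (Cmod (y1 tau - y2 tau) * Cmod (Ay a0 a3 a4 tau (y1 tau) (z1 tau) (y2 tau) * / (tau * (tau - 1))) <= Cmod (y1 tau - y2 tau) * (K1 + K2 + K3 + K4))%R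
        by (apply Rmult_le_compat_l; auto; lra).
      assert (Cmod (z1 tau - z2 tau) * Cmod (By tau (y2 tau) * / (tau * (tau - 1))) <= Cmod (z1 tau - z2 tau) * (K1 + K2 + K3 + K4))%R
        by (apply Rmult_le_compat_l; auto; lra).
      rewrite !Cmod_mult in *. lra.
    - unfold FZ. 
      replace (H_rhs_z a0 a1 a2 a3 a4 tau (y1 tau) (z1 tau) * / (tau * (tau - 1)) -
               H_rhs_z a0 a1 a2 a3 a4 tau (y2 tau) (z2 tau) * / (tau * (tau - 1)))
        with ((y1 tau - y2 tau) * (Az a0 a3 a4 tau (y1 tau) (z1 tau) (y2 tau) * / (tau * (tau - 1)))
            + (z1 tau - z2 tau) * (Bz a0 a3 a4 tau (y2 tau) (z1 tau) (z2 tau) * / (tau * (tau - 1)))).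
      2:{ symmetry; apply lin_inv; apply Hz_diff. }
      eapply Rle_trans; [apply Cmod_triangle|]. rewrite !Cmod_mult.
      assert (Cmod (y1 tau - y2 tau) * Cmod (Az a0 a3 a4 tau (y1 tau) (z1 tau) (y2 tau) * / (tau * (tau - 1))) <= Cmod (y1 tau - y2 tau) * (K1 + K2 + K3 + K4))%R
        by (apply Rmult_le_compat_l; auto; lra).
      assert (Cmod (z1 tau - z2 tau) * Cmod (Bz a0 a3 a4 tau (y2 tau) (z1 tau) (z2 tau) * / (tau * (tau - 1))) <= Cmod (z1 tau - z2 tau) * (K1 + K2 + K3 + K4))%R
        by (apply Rmult_le_compat_l; auto; lra).
      rewrite !Cmod_mult in *. lra. }
  { rewrite Ey. ring. }
  { rewrite Ez. ring. }
  exists d'. split; auto. intros t Ht. destruct (Z t Ht) as [U V].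
  split; [apply (f_equal (fun x => x + y2 t)) in U | apply (f_equal (fun x => x + z2 t)) in V];
  ring_simplify in U; ring_simplify in V; auto.
Qed.


Definition Py (w a0 : C) (t : C) : C :=
  - (w * w) + (1 - a0) * (t + w * w) + (1 + 2 * w) / 3 * a0 * (1 - a0) * ((t + w * w) * (t + w * w)).
Definition Pz (w a0 a2 : C) (t : C) : C :=
  (2 * w + 1) / 3 * a2 - a2 / 3 * (1 - a0) * (t + w * w).
Definition dPy (w a0 : C) (t : C) : C :=
  (1 - a0) + (1 + 2 * w) / 3 * a0 * (1 - a0) * (2 * (t + w * w)).
Definition dPz (a0 a2 : C) : C := - (a2 / 3 * (1 - a0)).

Definition Qy (w a2 a3 t : C) : C := (3)*a3 + (-18)*a3*a3 + (27)*a3*a3*a3 + (2)*a2 + (-24)*a2*a3 + (54)*a2*a3*a3 + (-8)*a2*a2 + (36)*a2*a2*a3 + (8)*a2*a2*a2 + (-2)*(t + w * w)*a3 + (8)*(t + w * w)*a3*a3 + (-18)*(t + w * w)*a3*a3*a3*a3 + (-4/3)*(t + w * w)*a2 + (34/3)*(t + w * w)*a2*a3 + (-4)*(t + w * w)*a2*a3*a3 + (-42)*(t + w * w)*a2*a3*a3*a3 + (4)*(t + w * w)*a2*a2 + (-16/3)*(t + w * w)*a2*a2*a3 + (-36)*(t + w * w)*a2*a2*a3*a3 + (-16/9)*(t + w * w)*a2*a2*a2 + (-40/3)*(t + w * w)*a2*a2*a2*a3 + (-16/9)*(t + w * w)*a2*a2*a2*a2 + (-4)*(t + w * w)*w*a3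 + (16)*(t + w * w)*w*a3*a3 + (-36)*(t + w * w)*w*a3*a3*a3*a3 + (-8/3)*(t + w * w)*w*a2 + (68/3)*(t + w * w)*w*a2*a3 + (-8)*(t + w * w)*w*a2*a3*a3 + (-84)*(t + w * w)*w*a2*a3*a3*a3 + (8)*(t + w * w)*w*a2*a2 + (-32/3)*(t + w * w)*w*a2*a2*a3 + (-72)*(t + w * w)*w*a2*a2*a3*a3 + (-32/9)*(t + w * w)*w*a2*a2*a2 + (-80/3)*(t + w * w)*w*a2*a2*a2*a3 + (-32/9)*(t + w * w)*w*a2*a2*a2*a2 + (-3)*(t + w * w)*(t + w * w)*a3*a3*a3 + (18)*(t + w * w)*(t + w * w)*a3*a3*a3*a3 + (-27)*(t + w * w)*(t + w * w)*a3*a3*a3*a3*a3 + (2)*(t + w * w)*(t + w * w)*a2*a3*a3 + (18)*(t + w * w)*(t + w * w)*a2*a3*a3*a3 + (-72)*(t + w * w)*(t + w * w)*a2*a3*a3*a3*a3 + (20/3)*(t + w * w)*(t + w * w)*a2*a2*a3 + (-12)*(t + w * w)*(t + w * w)*a2*a2*a3*a3 + (-72)*(t + w * w)*(t + w * w)*a2*a2*a3*a3*a3 + (8/3)*(t + w * w)*(t + w * w)*a2*a2*a2 + (-56/3)*(t + w * w)*(t + w * w)*a2*a2*a2*a3 + (-32)*(t + w * w)*(t + w * w)*a2*a2*a2*a3*a3 + (-16/3)*(t + w * w)*(t + w * w)*a2*a2*a2*a2 + (-16/3)*(t + w * w)*(t + w * w)*a2*a2*a2*a2*a3 + (2)*(t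 + w * w)*(t + w * w)*(t + w * w)*a2*a3*a3 + (-12)*(t + w * w)*(t + w * w)*(t + w * w)*a2*a3*a3*a3 + (54)*(t + w * w)*(t + w * w)*(t + w * w)*a2*a3*a3*a3*a3*a3 + (8/3)*(t + w * w)*(t + w * w)*(t + w * w)*a2*a2*a3 + (-24)*(t + w * w)*(t + w * w)*(t + w * w)*a2*a2*a3*a3 + (180)*(t + w * w)*(t + w * w)*(t + w * w)*a2*a2*a3*a3*a3*a3 + (8/9)*(t + w * w)*(t + w * w)*(t + w * w)*a2*a2*a2 + (-16)*(t + w * w)*(t + w * w)*(t + w * w)*a2*a2*a2*a3 + (240)*(t + w * w)*(t + w * w)*(t + w * w)*a2*a2*a2*a3*a3*a3 + (-32/9)*(t + w * w)*(t + w * w)*(t + w * w)*a2*a2*a2*a2 + (160)*(t + w * w)*(t + w * w)*(t + w * w)*a2*a2*a2*a2*a3*a3 + (160/3)*(t + w * w)*(t + w * w)*(t + w * w)*a2*a2*a2*a2*a2*a3 + (64/9)*(t + w * w)*(t + w * w)*(t + w * w)*a2*a2*a2*a2*a2*a2 + (4)*(t + w * w)*(t + w * w)*(t + w * w)*w*a2*a3*a3 + (-24)*(t + w * w)*(t + w * w)*(t + w * w)*w*a2*a3*a3*a3 + (108)*(t + w * w)*(t + w * w)*(t + w * w)*w*a2*a3*a3*a3*a3*a3 + (16/3)*(t + w * w)*(t + w * w)*(t + w * w)*w*a2*a2*a3 + (-48)*(t + w * w)*(t + w * w)*(t + w * w)*w*a2*a2*a3*a3 + (360)*(t + w * w)*(t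 + w * w)*(t + w * w)*w*a2*a2*a3*a3*a3*a3 + (16/9)*(t + w * w)*(t + w * w)*(t + w * w)*w*a2*a2*a2 + (-32)*(t + w * w)*(t + w * w)*(t + w * w)*w*a2*a2*a2*a3 + (480)*(t + w * w)*(t + w * w)*(t + w * w)*w*a2*a2*a2*a3*a3*a3 + (-64/9)*(t + w * w)*(t + w * w)*(t + w * w)*w*a2*a2*a2*a2 + (320)*(t + w * w)*(t + w * w)*(t + w * w)*w*a2*a2*a2*a2*a3*a3 + (320/3)*(t + w * w)*(t + w * w)*(t + w * w)*w*a2*a2*a2*a2*a2*a3 + (128/9)*(t + w * w)*(t + w * w)*(t + w * w)*w*a2*a2*a2*a2*a2*a2 + (36)*(t + w * w)*(t + w * w)*(t + w * w)*(t + w * w)*a2*a3*a3*a3*a3 + (-216)*(t + w * w)*(t + w * w)*(t + w * w)*(t + w * w)*a2*a3*a3*a3*a3*a3 + (324)*(t + w * w)*(t + w * w)*(t + w * w)*(t + w * w)*a2*a3*a3*a3*a3*a3*a3 + (96)*(t + w * w)*(t + w * w)*(t + w * w)*(t + w * w)*a2*a2*a3*a3*a3 + (-720)*(t + w * w)*(t + w * w)*(t + w * w)*(t + w * w)*a2*a2*a3*a3*a3*a3 + (1296)*(t + w * w)*(t + w * w)*(t + w * w)*(t + w * w)*a2*a2*a3*a3*a3*a3*a3 + (96)*(t + w * w)*(t + w * w)*(t + w * w)*(t + w * w)*a2*a2*a2*a3*a3 + (-960)*(t + w * w)*(t + w * w)*(t + w * w)*(t + w * w)*a2*a2*a2*a3*a3*a3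 + (2160)*(t + w * w)*(t + w * w)*(t + w * w)*(t + w * w)*a2*a2*a2*a3*a3*a3*a3 + (128/3)*(t + w * w)*(t + w * w)*(t + w * w)*(t + w * w)*a2*a2*a2*a2*a3 + (-640)*(t + w * w)*(t + w * w)*(t + w * w)*(t + w * w)*a2*a2*a2*a2*a3*a3 + (1920)*(t + w * w)*(t + w * w)*(t + w * w)*(t + w * w)*a2*a2*a2*a2*a3*a3*a3 + (64/9)*(t + w * w)*(t + w * w)*(t + w * w)*(t + w * w)*a2*a2*a2*a2*a2 + (-640/3)*(t + w * w)*(t + w * w)*(t + w * w)*(t + w * w)*a2*a2*a2*a2*a2*a3 + (960)*(t + w * w)*(t + w * w)*(t + w * w)*(t + w * w)*a2*a2*a2*a2*a2*a3*a3 + (-256/9)*(t + w * w)*(t + w * w)*(t + w * w)*(t + w * w)*a2*a2*a2*a2*a2*a2 + (256)*(t + w * w)*(t + w * w)*(t + w * w)*(t + w * w)*a2*a2*a2*a2*a2*a2*a3 + (256/9)*(t + w * w)*(t + w * w)*(t + w * w)*(t + w * w)*a2*a2*a2*a2*a2*a2*a2 + (6)*(t + w * w)*(t + w * w)*(t + w * w)*(t + w * w)*(t + w * w)*a2*a3*a3*a3*a3 + (-54)*(t + w * w)*(t + w * w)*(t + w * w)*(t + w * w)*(t + w * w)*a2*a3*a3*a3*a3*a3 + (162)*(t + w * w)*(t + w * w)*(t + w * w)*(t + w * w)*(t + w * w)*a2*a3*a3*a3*a3*a3*a3 + (-162)*(t + w * w)*(t + w * w)*(t + w * w)*(t + w *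 w)*(t + w * w)*a2*a3*a3*a3*a3*a3*a3*a3 + (16)*(t + w * w)*(t + w * w)*(t + w * w)*(t + w * w)*(t + w * w)*a2*a2*a3*a3*a3 + (-180)*(t + w * w)*(t + w * w)*(t + w * w)*(t + w * w)*(t + w * w)*a2*a2*a3*a3*a3*a3 + (648)*(t + w * w)*(t + w * w)*(t + w * w)*(t + w * w)*(t + w * w)*a2*a2*a3*a3*a3*a3*a3 + (-756)*(t + w * w)*(t + w * w)*(t + w * w)*(t + w * w)*(t + w * w)*a2*a2*a3*a3*a3*a3*a3*a3 + (16)*(t + w * w)*(t + w * w)*(t + w * w)*(t + w * w)*(t + w * w)*a2*a2*a2*a3*a3 + (-240)*(t + w * w)*(t + w * w)*(t + w * w)*(t + w * w)*(t + w * w)*a2*a2*a2*a3*a3*a3 + (1080)*(t + w * w)*(t + w * w)*(t + w * w)*(t + w * w)*(t + w * w)*a2*a2*a2*a3*a3*a3*a3 + (-1512)*(t + w * w)*(t + w * w)*(t + w * w)*(t + w * w)*(t + w * w)*a2*a2*a2*a3*a3*a3*a3*a3 + (64/9)*(t + w * w)*(t + w * w)*(t + w * w)*(t + w * w)*(t + w * w)*a2*a2*a2*a2*a3 + (-160)*(t + w * w)*(t + w * w)*(t + w * w)*(t + w * w)*(t + w * w)*a2*a2*a2*a2*a3*a3 + (960)*(t + w * w)*(t + w * w)*(t + w * w)*(t + w * w)*(t + w * w)*a2*a2*a2*a2*a3*a3*a3 + (-1680)*(t + w * w)*(t + w * w)*(t + w * w)*(t + w * w)*(t + w * w)*a2*a2*a2*a2*a3*a3*a3*a3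 + (32/27)*(t + w * w)*(t + w * w)*(t + w * w)*(t + w * w)*(t + w * w)*a2*a2*a2*a2*a2 + (-160/3)*(t + w * w)*(t + w * w)*(t + w * w)*(t + w * w)*(t + w * w)*a2*a2*a2*a2*a2*a3 + (480)*(t + w * w)*(t + w * w)*(t + w * w)*(t + w * w)*(t + w * w)*a2*a2*a2*a2*a2*a3*a3 + (-1120)*(t + w * w)*(t + w * w)*(t + w * w)*(t + w * w)*(t + w * w)*a2*a2*a2*a2*a2*a3*a3*a3 + (-64/9)*(t + w * w)*(t + w * w)*(t + w * w)*(t + w * w)*(t + w * w)*a2*a2*a2*a2*a2*a2 + (128)*(t + w * w)*(t + w * w)*(t + w * w)*(t + w * w)*(t + w * w)*a2*a2*a2*a2*a2*a2*a3 + (-448)*(t + w * w)*(t + w * w)*(t + w * w)*(t + w * w)*(t + w * w)*a2*a2*a2*a2*a2*a2*a3*a3 + (128/9)*(t + w * w)*(t + w * w)*(t + w * w)*(t + w * w)*(t + w * w)*a2*a2*a2*a2*a2*a2*a2 + (-896/9)*(t + w * w)*(t + w * w)*(t + w * w)*(t + w * w)*(t + w * w)*a2*a2*a2*a2*a2*a2*a2*a3 + (-256/27)*(t + w * w)*(t + w * w)*(t + w * w)*(t + w * w)*(t + w * w)*a2*a2*a2*a2*a2*a2*a2*a2 + (12)*(t + w * w)*(t + w * w)*(t + w * w)*(t + w * w)*(t + w * w)*w*a2*a3*a3*a3*a3 + (-108)*(t + w * w)*(t + w * w)*(t + w * w)*(t + w * w)*(t + w * w)*w*a2*a3*a3*a3*a3*a3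 + (324)*(t + w * w)*(t + w * w)*(t + w * w)*(t + w * w)*(t + w * w)*w*a2*a3*a3*a3*a3*a3*a3 + (-324)*(t + w * w)*(t + w * w)*(t + w * w)*(t + w * w)*(t + w * w)*w*a2*a3*a3*a3*a3*a3*a3*a3 + (32)*(t + w * w)*(t + w * w)*(t + w * w)*(t + w * w)*(t + w * w)*w*a2*a2*a3*a3*a3 + (-360)*(t + w * w)*(t + w * w)*(t + w * w)*(t + w * w)*(t + w * w)*w*a2*a2*a3*a3*a3*a3 + (1296)*(t + w * w)*(t + w * w)*(t + w * w)*(t + w * w)*(t + w * w)*w*a2*a2*a3*a3*a3*a3*a3 + (-1512)*(t + w * w)*(t + w * w)*(t + w * w)*(t + w * w)*(t + w * w)*w*a2*a2*a3*a3*a3*a3*a3*a3 + (32)*(t + w * w)*(t + w * w)*(t + w * w)*(t + w * w)*(t + w * w)*w*a2*a2*a2*a3*a3 + (-480)*(t + w * w)*(t + w * w)*(t + w * w)*(t + w * w)*(t + w * w)*w*a2*a2*a2*a3*a3*a3 + (2160)*(t + w * w)*(t + w * w)*(t + w * w)*(t + w * w)*(t + w * w)*w*a2*a2*a2*a3*a3*a3*a3 + (-3024)*(t + w * w)*(t + w * w)*(t + w * w)*(t + w * w)*(t + w * w)*w*a2*a2*a2*a3*a3*a3*a3*a3 + (128/9)*(t + w * w)*(t + w * w)*(t + w * w)*(t + w * w)*(t + w * w)*w*a2*a2*a2*a2*a3 + (-320)*(t + w * w)*(t + w * w)*(t + w * w)*(t + w * w)*(t + w * w)*w*a2*a2*a2*a2*a3*a3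 + (1920)*(t + w * w)*(t + w * w)*(t + w * w)*(t + w * w)*(t + w * w)*w*a2*a2*a2*a2*a3*a3*a3 + (-3360)*(t + w * w)*(t + w * w)*(t + w * w)*(t + w * w)*(t + w * w)*w*a2*a2*a2*a2*a3*a3*a3*a3 + (64/27)*(t + w * w)*(t + w * w)*(t + w * w)*(t + w * w)*(t + w * w)*w*a2*a2*a2*a2*a2 + (-320/3)*(t + w * w)*(t + w * w)*(t + w * w)*(t + w * w)*(t + w * w)*w*a2*a2*a2*a2*a2*a3 + (960)*(t + w * w)*(t + w * w)*(t + w * w)*(t + w * w)*(t + w * w)*w*a2*a2*a2*a2*a2*a3*a3 + (-2240)*(t + w * w)*(t + w * w)*(t + w * w)*(t + w * w)*(t + w * w)*w*a2*a2*a2*a2*a2*a3*a3*a3 + (-128/9)*(t + w * w)*(t + w * w)*(t + w * w)*(t + w * w)*(t + w * w)*w*a2*a2*a2*a2*a2*a2 + (256)*(t + w * w)*(t + w * w)*(t + w * w)*(t + w * w)*(t + w * w)*w*a2*a2*a2*a2*a2*a2*a3 + (-896)*(t + w * w)*(t + w * w)*(t + w * w)*(t + w * w)*(t + w * w)*w*a2*a2*a2*a2*a2*a2*a3*a3 + (256/9)*(t + w * w)*(t + w * w)*(t + w * w)*(t + w * w)*(t + w * w)*w*a2*a2*a2*a2*a2*a2*a2 + (-1792/9)*(t + w * w)*(t + w * w)*(t + w * w)*(t + w * w)*(t + w * w)*w*a2*a2*a2*a2*a2*a2*a2*a3 + (-512/27)*(t + w * w)*(t + w * w)*(t + w * w)*(t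 + w * w)*(t + w * w)*w*a2*a2*a2*a2*a2*a2*a2*a2.
Definition Qz (w a2 a3 t : C) : C := (1/3)*a2*a3 + (1/3)*a2*a2 + (-2/3)*a2*a2*a3 + (-4/9)*a2*a2*a2 + (2/3)*w*a2*a3 + (2/3)*w*a2*a2 + (-4/3)*w*a2*a2*a3 + (-8/9)*w*a2*a2*a2 + (1)*(t + w * w)*a2*a3 + (4)*(t + w * w)*a2*a3*a3 + (2/3)*(t + w * w)*a2*a2 + (14/3)*(t + w * w)*a2*a2*a3 + (4)*(t + w * w)*a2*a2*a3*a3 + (4/3)*(t + w * w)*a2*a2*a2 + (16/3)*(t + w * w)*a2*a2*a2*a3 + (16/9)*(t + w * w)*a2*a2*a2*a2 + (2)*(t + w * w)*(t + w * w)*a2*a3*a3*a3 + (-6)*(t + w * w)*(t + w * w)*a2*a3*a3*a3*a3 + (-2/3)*(t + w * w)*(t + w * w)*a2*a2*a3 + (23/3)*(t + w * w)*(t + w * w)*a2*a2*a3*a3 + (-18)*(t + w * w)*(t + w * w)*a2*a2*a3*a3*a3 + (-4/9)*(t + w * w)*(t + w * w)*a2*a2*a2 + (68/9)*(t + w * w)*(t + w * w)*a2*a2*a2*a3 + (-20)*(t + w * w)*(t + w * w)*a2*a2*a2*a3*a3 + (20/9)*(t + w * w)*(t + w * w)*a2*a2*a2*a2 + (-88/9)*(t + w * w)*(t + w * w)*a2*a2*a2*a2*a3 + (-16/9)*(t + w * w)*(t + w * w)*a2*a2*a2*a2*a2 + (4)*(t + w * w)*(t + w * w)*w*a2*a3*a3*a3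 + (-12)*(t + w * w)*(t + w * w)*w*a2*a3*a3*a3*a3 + (-4/3)*(t + w * w)*(t + w * w)*w*a2*a2*a3 + (46/3)*(t + w * w)*(t + w * w)*w*a2*a2*a3*a3 + (-36)*(t + w * w)*(t + w * w)*w*a2*a2*a3*a3*a3 + (-8/9)*(t + w * w)*(t + w * w)*w*a2*a2*a2 + (136/9)*(t + w * w)*(t + w * w)*w*a2*a2*a2*a3 + (-40)*(t + w * w)*(t + w * w)*w*a2*a2*a2*a3*a3 + (40/9)*(t + w * w)*(t + w * w)*w*a2*a2*a2*a2 + (-176/9)*(t + w * w)*(t + w * w)*w*a2*a2*a2*a2*a3 + (-32/9)*(t + w * w)*(t + w * w)*w*a2*a2*a2*a2*a2 + (1)*(t + w * w)*(t + w * w)*(t + w * w)*a2*a2*a3*a3 + (-18)*(t + w * w)*(t + w * w)*(t + w * w)*a2*a2*a3*a3*a3 + (36)*(t + w * w)*(t + w * w)*(t + w * w)*a2*a2*a3*a3*a3*a3 + (4/3)*(t + w * w)*(t + w * w)*(t + w * w)*a2*a2*a2*a3 + (-36)*(t + w * w)*(t + w * w)*(t + w * w)*a2*a2*a2*a3*a3 + (96)*(t + w * w)*(t + w * w)*(t + w * w)*a2*a2*a2*a3*a3*a3 + (4/9)*(t + w * w)*(t + w * w)*(t + w * w)*a2*a2*a2*a2 + (-24)*(t + w * w)*(t + w * w)*(t + w * w)*a2*a2*a2*a2*a3 + (96)*(t + w * w)*(t + w * w)*(t + w * w)*a2*a2*a2*a2*a3*a3 + (-16/3)*(t + w * w)*(t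 + w * w)*(t + w * w)*a2*a2*a2*a2*a2 + (128/3)*(t + w * w)*(t + w * w)*(t + w * w)*a2*a2*a2*a2*a2*a3 + (64/9)*(t + w * w)*(t + w * w)*(t + w * w)*a2*a2*a2*a2*a2*a2 + (-4)*(t + w * w)*(t + w * w)*(t + w * w)*(t + w * w)*a2*a2*a3*a3*a3 + (12)*(t + w * w)*(t + w * w)*(t + w * w)*(t + w * w)*a2*a2*a3*a3*a3*a3 + (-8)*(t + w * w)*(t + w * w)*(t + w * w)*(t + w * w)*a2*a2*a2*a3*a3 + (32)*(t + w * w)*(t + w * w)*(t + w * w)*(t + w * w)*a2*a2*a2*a3*a3*a3 + (-16/3)*(t + w * w)*(t + w * w)*(t + w * w)*(t + w * w)*a2*a2*a2*a2*a3 + (32)*(t + w * w)*(t + w * w)*(t + w * w)*(t + w * w)*a2*a2*a2*a2*a3*a3 + (-32/27)*(t + w * w)*(t + w * w)*(t + w * w)*(t + w * w)*a2*a2*a2*a2*a2 + (128/9)*(t + w * w)*(t + w * w)*(t + w * w)*(t + w * w)*a2*a2*a2*a2*a2*a3 + (64/27)*(t + w * w)*(t + w * w)*(t + w * w)*(t + w * w)*a2*a2*a2*a2*a2*a2 + (-8)*(t + w * w)*(t + w * w)*(t + w * w)*(t + w * w)*w*a2*a2*a3*a3*a3 + (24)*(t + w * w)*(t + w * w)*(t + w * w)*(t + w * w)*w*a2*a2*a3*a3*a3*a3 + (-16)*(t + w * w)*(t + w * w)*(t + w * w)*(t + w * w)*w*a2*a2*a2*a3*a3 + (64)*(t + w *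 w)*(t + w * w)*(t + w * w)*(t + w * w)*w*a2*a2*a2*a3*a3*a3 + (-32/3)*(t + w * w)*(t + w * w)*(t + w * w)*(t + w * w)*w*a2*a2*a2*a2*a3 + (64)*(t + w * w)*(t + w * w)*(t + w * w)*(t + w * w)*w*a2*a2*a2*a2*a3*a3 + (-64/27)*(t + w * w)*(t + w * w)*(t + w * w)*(t + w * w)*w*a2*a2*a2*a2*a2 + (256/9)*(t + w * w)*(t + w * w)*(t + w * w)*(t + w * w)*w*a2*a2*a2*a2*a2*a3 + (128/27)*(t + w * w)*(t + w * w)*(t + w * w)*(t + w * w)*w*a2*a2*a2*a2*a2*a2 + (9)*(t + w * w)*(t + w * w)*(t + w * w)*(t + w * w)*(t + w * w)*a2*a2*a3*a3*a3*a3 + (-54)*(t + w * w)*(t + w * w)*(t + w * w)*(t + w * w)*(t + w * w)*a2*a2*a3*a3*a3*a3*a3 + (81)*(t + w * w)*(t + w * w)*(t + w * w)*(t + w * w)*(t + w * w)*a2*a2*a3*a3*a3*a3*a3*a3 + (24)*(t + w * w)*(t + w * w)*(t + w * w)*(t + w * w)*(t + w * w)*a2*a2*a2*a3*a3*a3 + (-180)*(t + w * w)*(t + w * w)*(t + w * w)*(t + w * w)*(t + w * w)*a2*a2*a2*a3*a3*a3*a3 + (324)*(t + w * w)*(t + w * w)*(t + w * w)*(t + w * w)*(t + w * w)*a2*a2*a2*a3*a3*a3*a3*a3 + (24)*(t + w * w)*(t + w * w)*(t + w * w)*(t + w * w)*(t + w * w)*a2*a2*a2*a2*a3*a3 + (-240)*(t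 + w * w)*(t + w * w)*(t + w * w)*(t + w * w)*(t + w * w)*a2*a2*a2*a2*a3*a3*a3 + (540)*(t + w * w)*(t + w * w)*(t + w * w)*(t + w * w)*(t + w * w)*a2*a2*a2*a2*a3*a3*a3*a3 + (32/3)*(t + w * w)*(t + w * w)*(t + w * w)*(t + w * w)*(t + w * w)*a2*a2*a2*a2*a2*a3 + (-160)*(t + w * w)*(t + w * w)*(t + w * w)*(t + w * w)*(t + w * w)*a2*a2*a2*a2*a2*a3*a3 + (480)*(t + w * w)*(t + w * w)*(t + w * w)*(t + w * w)*(t + w * w)*a2*a2*a2*a2*a2*a3*a3*a3 + (16/9)*(t + w * w)*(t + w * w)*(t + w * w)*(t + w * w)*(t + w * w)*a2*a2*a2*a2*a2*a2 + (-160/3)*(t + w * w)*(t + w * w)*(t + w * w)*(t + w * w)*(t + w * w)*a2*a2*a2*a2*a2*a2*a3 + (240)*(t + w * w)*(t + w * w)*(t + w * w)*(t + w * w)*(t + w * w)*a2*a2*a2*a2*a2*a2*a3*a3 + (-64/9)*(t + w * w)*(t + w * w)*(t + w * w)*(t + w * w)*(t + w * w)*a2*a2*a2*a2*a2*a2*a2 + (64)*(t + w * w)*(t + w * w)*(t + w * w)*(t + w * w)*(t + w * w)*a2*a2*a2*a2*a2*a2*a2*a3 + (64/9)*(t + w * w)*(t + w * w)*(t + w * w)*(t + w * w)*(t + w * w)*a2*a2*a2*a2*a2*a2*a2*a2.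

Lemma C3_neq_0 : (3 : C) <> 0.
Proof. intro E. apply (f_equal fst) in E. simpl in E. lra. Qed.

Lemma Ry_eq (w a2 a3 t : C) : w * w = -1 - w ->
  H_rhs_y (1 - 2 * a2 - 3 * a3) a2 a3 a3 t (Py w (1 - 2 * a2 - 3 * a3) t) (Pz w (1 - 2 * a2 - 3 * a3) a2 t)
  - t * (t - 1) * dPy w (1 - 2 * a2 - 3 * a3) t
  = (t + w * w) * (t + w * w) * Qy w a2 a3 t.
Proof. intros Hw. unfold H_rhs_y, Py, Pz, dPy, Qy. field [Hw]; try exact C3_neq_0. Qed.

Lemma Rz_eq (w a2 a3 t : C) : w * w = -1 - w ->
  H_rhs_z (1 - 2 * a2 - 3 * a3) a3 a2 a3 a3 t (Py w (1 - 2 * a2 - 3 * a3) t) (Pz w (1 - 2 * a2 - 3 * a3) a2 t)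
  - t * (t - 1) * dPz (1 - 2 * a2 - 3 * a3) a2
  = (t + w * w) * Qz w a2 a3 t.
Proof. intros Hw. unfold H_rhs_z, Py, Pz, dPz, Qz. field [Hw]; try exact C3_neq_0. Qed.

Lemma resid_form (Hh Hp D i dP X : C) : Hh - Hp = X -> D * i = 1 ->
  Hh * i - dP = ((Hp - D * dP) + X) * i.
Proof.
  intros E1 E2. rewrite <- E1.
  replace (((Hp - D * dP) + (Hh - Hp)) * i) with (Hh * i - (D * i) * dP) by ring.
  rewrite E2. ring.
Qed.

Lemma BO_mul0 t0 f g n : BO t0 f n -> BO t0 g 0 -> BO t0 (fun t => f t * g t) n.
Proof. intros H1 H2. pose proof (BO_mul t0 f g n 0 H1 H2) as H. rewrite Nat.add_0_r in H. exact H. Qed.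

Lemma combine t0 (R e f A B i : C -> C) n :
  BO t0 R n -> BO t0 e n -> BO t0 f n -> BO t0 A 0 -> BO t0 B 0 -> BO t0 i 0 ->
  BO t0 (fun t => (R t + e t * A t + f t * B t) * i t) n.
Proof.
  intros. apply BO_mul0; auto. apply BO_add; [apply BO_add|]; auto; apply BO_mul0; auto.
Qed.

Lemma BO_h1 (w : C) Q : BO (- (w * w)) Q 0 -> BO (- (w * w)) (fun t => (t + w * w) * Q t) 1.
Proof.
  intros H. apply (BO_ext _ (fun t => (t - - (w * w)) * Q t)); [intros; ring|].
  apply BO_mul0; auto. apply BO_id.
Qed.

Lemma BO_h2 (w : C) Q : BO (- (w * w)) Q 0 -> BO (- (w * w)) (fun t => (t + w * w) * (t + w * w) * Q t) 2.
Proof.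
  intros H. apply (BO_ext _ (fun t => ((t - - (w * w)) * (t - - (w * w))) * Q t)); [intros; ring|].
  apply BO_mul0; auto. exact (BO_mul _ _ _ 1 1 (BO_id _) (BO_id _)).
Qed.

Lemma Cm1_neq_0 : (- (1) : C) <> 0.
Proof. intro E. apply (f_equal fst) in E. simpl in E. lra. Qed.

Lemma t0_nz (w : C) : w * w = -1 - w -> - (w * w) * (- (w * w) - 1) <> 0.
Proof.
  intros Hw. replace (- (w * w) * (- (w * w) - 1)) with (- (1) : C) by ring [Hw].
  exact Cm1_neq_0.
Qed.


Lemma taylor (w a2 a3 : C) (y z : C -> C) (r : R) :
  w * w = -1 - w -> (0 < r)%R ->
  solves_H_on (1 - 2 * a2 - 3 * a3) a3 a2 a3 a3 y z (- (w * w)) r ->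
  y (- (w * w)) = - (w * w) -> z (- (w * w)) = (2 * w + 1) / 3 * a2 ->
  BO (- (w * w)) (fun t => y t - Py w (1 - 2 * a2 - 3 * a3) t) 3 /\
  BO (- (w * w)) (fun t => z t - Pz w (1 - 2 * a2 - 3 * a3) a2 t) 2.
Proof.
  intros Hw Hr Hs Hy0 Hz0.
  set (A0 := 1 - 2 * a2 - 3 * a3) in *.
  set (t0 := - (w * w)) in *.
  assert (Hn : t0 * (t0 - 1) <> 0) by (apply t0_nz; auto).
  destruct (sol_deriv _ _ _ _ _ _ _ _ _ Hr Hn Hs) as [d1 [Hd1 [_ D]]].
  destruct (inv_tt_near t0 Hn) as [d2 [Hd2 Hnz]].
  assert (E0 : (Cmod (t0 - t0) < d1)%R).
  { assert (X : t0 - t0 = 0) by ring. rewrite X, Cmod_0. lra. }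
  destruct (D t0 E0) as [Dy0 Dz0].
  pose proof (BO0_of_deriv _ _ _ Dy0) as By0.
  pose proof (BO0_of_deriv _ _ _ Dz0) as Bz0.
  pose proof (BO_inv_tt t0 Hn) as Binv.
  assert (DPy : forall tau, Cderiv (Py w A0) tau (dPy w A0 tau)).
  { intros tau. unfold Py. eapply Cd_ext_l; [cdauto | unfold dPy; cbv beta; ring]. }
  assert (DPz : forall tau, Cderiv (Pz w A0 a2) tau (dPz A0 a2)).
  { intros tau. unfold Pz. eapply Cd_ext_l; [cdauto | unfold dPz; cbv beta; ring]. }
  assert (BPy : BO t0 (fun t => Py w A0 t) 0) by (unfold Py; bo0).
  assert (BPz : BO t0 (fun t => Pz w A0 a2 t) 0) by (unfold Pz; bo0).
  set (e := fun t => y t - Py w A0 t).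
  set (f := fun t => z t - Pz w A0 a2 t).
  set (E1 := fun t => FY A0 a2 a3 a3 y z t - dPy w A0 t).
  set (E2 := fun t => FZ A0 a3 a2 a3 a3 y z t - dPz A0 a2).
  assert (He0 : e t0 = 0) by (unfold e, Py, t0 in *; rewrite Hy0; ring).
  assert (Hf0 : f t0 = 0) by (unfold f, Pz, t0 in *; rewrite Hz0; ring).
  assert (De : exists d, (0 < d)%R /\ forall tau, (Cmod (tau - t0) < d)%R -> Cderiv e tau (E1 tau)).
  { exists d1; split; auto. intros tau Ht. destruct (D tau Ht) as [Dy Dz].
    unfold e, E1. apply Cd_minus; auto. }
  assert (Df : exists d, (0 < d)%R /\ forall tau, (Cmod (tau - t0) < d)%R -> Cderiv f tau (E2 tau)).
  { exists d1; split; auto. intros tau Ht. destruct (D tau Ht) as [Dy Dz].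
    unfold f, E2. apply (Cd_minus z (Pz w A0 a2)); auto. }
  assert (BE1 : BO t0 E1 0) by (unfold E1, FY, H_rhs_y, dPy; bo0).
  assert (BE2 : BO t0 E2 0) by (unfold E2, FZ, H_rhs_z, dPz; bo0).
  pose proof (BO_integrate t0 e E1 0 He0 De BE1) as Be1.
  pose proof (BO_integrate t0 f E2 0 Hf0 Df BE2) as Bf1.
  set (Ry := fun t => H_rhs_y A0 a2 a3 a3 t (Py w A0 t) (Pz w A0 a2 t) - t * (t - 1) * dPy w A0 t).
  set (Rz := fun t => H_rhs_z A0 a3 a2 a3 a3 t (Py w A0 t) (Pz w A0 a2 t) - t * (t - 1) * dPz A0 a2).
  assert (BRy : BO t0 Ry 2).
  { apply (BO_ext _ (fun t => (t + w * w) * (t + w * w) * Qy w a2 a3 t)).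
    { intros t. unfold Ry, A0. rewrite Ry_eq; auto. }
    apply BO_h2. unfold Qy. bo0. }
  assert (BRz : BO t0 Rz 1).
  { apply (BO_ext _ (fun t => (t + w * w) * Qz w a2 a3 t)).
    { intros t. unfold Rz, A0. rewrite Rz_eq; auto. }
    apply BO_h1. unfold Qz. bo0. }
  assert (BAy : BO t0 (fun t => Ay A0 a3 a3 t (y t) (z t) (Py w A0 t)) 0) by (unfold Ay; bo0).
  assert (BBy : BO t0 (fun t => By t (Py w A0 t)) 0) by (unfold By; bo0).
  assert (BAz : BO t0 (fun t => Az A0 a3 a3 t (y t) (z t) (Py w A0 t)) 0) by (unfold Az; bo0).
  assert (BBz : BO t0 (fun t => Bz A0 a3 a3 t (Py w A0 t) (z t) (Pz w A0 a2 t)) 0) by (unfold Bz; bo0).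
  assert (LE1 : exists d, (0 < d)%R /\ forall t, (Cmod (t - t0) < d)%R ->
     (fun t => (Ry t + e t * Ay A0 a3 a3 t (y t) (z t) (Py w A0 t) + f t * By t (Py w A0 t)) * / (t * (t - 1))) t = E1 t).
  { exists d2; split; auto. intros t Ht. specialize (Hnz t Ht). cbv beta.
    unfold E1, FY, Ry, e, f; cbv beta. symmetry. rewrite <- Cplus_assoc. apply resid_form.
    - apply Hy_diff.
    - apply Cinv_r. auto. }
  assert (LE2 : exists d, (0 < d)%R /\ forall t, (Cmod (t - t0) < d)%R ->
     (fun t => (Rz t + e t * Az A0 a3 a3 t (y t) (z t) (Py w A0 t) + f t * Bz A0 a3 a3 t (Py w A0 t) (z t) (Pz w A0 a2 t)) * / (t * (t - 1))) t = E2 t).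
  { exists d2; split; auto. intros t Ht. specialize (Hnz t Ht). cbv beta.
    unfold E2, FZ, Rz, e, f; cbv beta. symmetry. rewrite <- Cplus_assoc. apply resid_form.
    - apply Hz_diff.
    - apply Cinv_r. auto. }
  assert (Be2 : BO t0 e 2).
  { apply (BO_integrate t0 e E1 1 He0 De). apply (BO_ext_loc _ _ _ _ LE1).
    apply combine; auto. apply (BO_weaken _ _ 2); auto. }
  assert (Bf2 : BO t0 f 2).
  { apply (BO_integrate t0 f E2 1 Hf0 Df). apply (BO_ext_loc _ _ _ _ LE2).
    apply combine; auto. }
  split; auto.
  apply (BO_integrate t0 e E1 2 He0 De). apply (BO_ext_loc _ _ _ _ LE1).
  apply combine; auto.
Qed.

Lemma side1 (tau : C) : tau - 1 - tau <> 0.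
Proof. intro E. apply (f_equal fst) in E. simpl in E. lra. Qed.

Ltac sidec := cbv beta; repeat split; auto; try apply side1.

Lemma inv_y (a2 a3 tau Y Z dy : C) :
  tau <> 0 -> tau - 1 <> 0 -> 1 - Y <> 0 ->
  (1 - / tau) * ((1 - / tau) - 1) * dy = H_rhs_y (1 - 2 * a2 - 3 * a3) a2 a3 a3 (1 - / tau) Y Z ->
  tau * (tau - 1) * (- (0 - / (tau * tau) * dy) / ((1 - Y) * (1 - Y)))
  = H_rhs_y (1 - 2 * a2 - 3 * a3) a2 a3 a3 tau (/ (1 - Y)) (Z * (1 - Y) * (1 - Y) - a2 * (1 - Y)).
Proof.
  intros H1 H2 H3 E.
  assert (Edy : dy = H_rhs_y (1 - 2 * a2 - 3 * a3) a2 a3 a3 (1 - / tau) Y Z / ((1 - / tau) * ((1 - / tau) - 1))).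
  { rewrite <- E. field. sidec. }
  rewrite Edy. unfold H_rhs_y. field. sidec.
Qed.

Lemma inv_z (a2 a3 tau Y Z dy dz : C) :
  tau <> 0 -> tau - 1 <> 0 -> 1 - Y <> 0 ->
  (1 - / tau) * ((1 - / tau) - 1) * dy = H_rhs_y (1 - 2 * a2 - 3 * a3) a2 a3 a3 (1 - / tau) Y Z ->
  (1 - / tau) * ((1 - / tau) - 1) * dz = H_rhs_z (1 - 2 * a2 - 3 * a3) a3 a2 a3 a3 (1 - / tau) Y Z ->
  tau * (tau - 1) * (((/ (tau * tau) * dz * (1 - Y) + Z * (0 - / (tau * tau) * dy)) * (1 - Y)
        + Z * (1 - Y) * (0 - / (tau * tau) * dy)) - (0 * (1 - Y) + a2 * (0 - / (tau * tau) * dy)))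
  = H_rhs_z (1 - 2 * a2 - 3 * a3) a3 a2 a3 a3 tau (/ (1 - Y)) (Z * (1 - Y) * (1 - Y) - a2 * (1 - Y)).
Proof.
  intros H1 H2 H3 E E'.
  assert (Edy : dy = H_rhs_y (1 - 2 * a2 - 3 * a3) a2 a3 a3 (1 - / tau) Y Z / ((1 - / tau) * ((1 - / tau) - 1))).
  { rewrite <- E. field. sidec. }
  assert (Edz : dz = H_rhs_z (1 - 2 * a2 - 3 * a3) a3 a2 a3 a3 (1 - / tau) Y Z / ((1 - / tau) * ((1 - / tau) - 1))).
  { rewrite <- E'. field. sidec. }
  rewrite Edy, Edz. unfold H_rhs_y, H_rhs_z. field. sidec.
Qed.

Lemma w_nz (w : C) : w * w = -1 - w -> w <> 0.
Proof. intros Hw E. subst w. apply (f_equal fst) in Hw. simpl in Hw. lra. Qed.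

Lemma invariance (w a2 a3 : C) (y z : C -> C) (r : R) :
  w * w = -1 - w -> (0 < r)%R ->
  solves_H_on (1 - 2 * a2 - 3 * a3) a3 a2 a3 a3 y z (- (w * w)) r ->
  y (- (w * w)) = - (w * w) -> z (- (w * w)) = (2 * w + 1) / 3 * a2 ->
  exists d : R, (0 < d)%R /\
     forall t : C, (Cmod (t + w * w) < d)%R ->
       y (1 / (1 - t)) = 1 / (1 - y t) /\
       z (1 / (1 - t)) = - (1 - y t) * (- z t * (1 - y t) + a2).
Proof.
  intros Hw Hr Hs Hy0 Hz0.
  set (A0 := 1 - 2 * a2 - 3 * a3) in *.
  set (t0 := - (w * w)) in *.
  assert (Hw0 : w <> 0) by (apply w_nz; auto).
  assert (Hn : t0 * (t0 - 1) <> 0) by (apply t0_nz; auto).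
  assert (Ht0 : t0 <> 0) by (intro X; apply Hn; rewrite X; ring).
  assert (Ht01 : t0 - 1 <> 0) by (intro X; apply Hn; rewrite X; ring).
  assert (H1t0 : 1 - t0 <> 0) by (intro X; apply Ht01; replace (t0 - 1) with (- (1 - t0)) by ring; rewrite X; ring).
  assert (St0 : 1 - / t0 = t0) by (unfold t0; field [Hw]; auto).
  assert (Tt0 : / (1 - t0) = t0).
  { unfold t0 in *. field [Hw]. cbv beta. exact H1t0. }
  assert (E0 : forall d, (0 < d)%R -> (Cmod (t0 - t0) < d)%R).
  { intros d Hd. assert (X : t0 - t0 = 0) by ring. rewrite X, Cmod_0. lra. }
  assert (DS : forall tau : C, tau <> 0 -> Cderiv (fun t => 1 - / t) tau (/ (tau * tau))).
  { intros tau Htau. eapply Cd_ext_l.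
    - apply (Cd_minus (fun _ => 1) (fun t => / t)). apply Cd_const. apply (Cd_inv (fun t => t)). apply Cd_id. exact Htau.
    - field. auto. }
  destruct (Hs t0 (E0 _ Hr)) as [dy0 [dz0 [Dy0 [Dz0 _]]]].
  assert (Dg0 : Cderiv (fun t => 1 - y (1 - / t)) t0 (0 - / (t0 * t0) * dy0)).
  { apply (Cd_minus (fun _ => 1) (fun t => y (1 - / t))). apply Cd_const.
    apply (Cd_comp y (fun t => 1 - / t)). rewrite St0. exact Dy0. apply DS; auto. }
  assert (Hg0 : 1 - y (1 - / t0) <> 0) by (rewrite St0, Hy0; auto).
  destruct (nonzero_near t0 _ _ Dg0 Hg0) as [dg [Hdg Hg]].
  destruct (nonzero_near t0 _ _ (Cd_id t0) Ht0) as [dt [Hdt Htn]].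
  destruct (nonzero_near t0 (fun t => t - 1) _ (Cd_minus (fun t => t) (fun _ => 1) t0 _ _ (Cd_id t0) (Cd_const 1 t0)) Ht01) as [dt1 [Hdt1 Htn1]].
  destruct (Cderiv_cont (fun t => 1 - / t) t0 _ (DS t0 Ht0) r Hr) as [dS [HdS HS]].
  set (rho := Rmin (Rmin dg dt) (Rmin dt1 dS)).
  assert (Hrho : (0 < rho)%R) by (unfold rho; repeat apply Rmin_glb_lt; auto).
  set (Yh := fun t => / (1 - y (1 - / t))).
  set (Zh := fun t => z (1 - / t) * (1 - y (1 - / t)) * (1 - y (1 - / t)) - a2 * (1 - y (1 - / t))).
  assert (Sol : solves_H_on A0 a3 a2 a3 a3 Yh Zh t0 rho).
  { intros tau Htau.
    assert (T1 : (Cmod (tau - t0) < dg)%R) by (eapply Rlt_le_trans; [exact Htau|]; unfold rho; eapply Rle_trans; apply Rmin_l).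
    assert (T2 : (Cmod (tau - t0) < dt)%R) by (eapply Rlt_le_trans; [exact Htau|]; unfold rho; eapply Rle_trans; [apply Rmin_l| apply Rmin_r]).
    assert (T3 : (Cmod (tau - t0) < dt1)%R) by (eapply Rlt_le_trans; [exact Htau|]; unfold rho; eapply Rle_trans; [apply Rmin_r| apply Rmin_l]).
    assert (T4 : (Cmod (tau - t0) < dS)%R) by (eapply Rlt_le_trans; [exact Htau|]; unfold rho; eapply Rle_trans; [apply Rmin_r| apply Rmin_r]).
    assert (Hgt : 1 - y (1 - / tau) <> 0).
    { specialize (Hg tau T1). intro X. cbv beta in Hg. rewrite X, Cmod_0 in Hg.
      assert (0 < Cmod ((1 - y (1 - / t0))%C))%R by (apply Cmod_gt_0; auto). lra. }
    assert (Htau0 : tau <> 0).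
    { specialize (Htn tau T2). intro X. rewrite X, Cmod_0 in Htn.
      assert (0 < Cmod t0)%R by (apply Cmod_gt_0; auto). lra. }
    assert (Htau1 : tau - 1 <> 0).
    { specialize (Htn1 tau T3). intro X. cbv beta in Htn1. rewrite X, Cmod_0 in Htn1.
      assert (0 < Cmod ((t0 - 1)%C))%R by (apply Cmod_gt_0; auto). lra. }
    assert (HSin : (Cmod (((1 - / tau) - t0)%C) < r)%R).
    { specialize (HS tau T4). cbv beta in HS. rewrite St0 in HS. exact HS. }
    destruct (Hs _ HSin) as [dy [dz [Dy [Dz [Ey Ez]]]]].
    pose proof (Cd_comp y (fun t => 1 - / t) tau dy _ Dy (DS tau Htau0)) as Dys.
    pose proof (Cd_comp z (fun t => 1 - / t) tau dz _ Dz (DS tau Htau0)) as Dzs.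
    pose proof (Cd_minus (fun _ => 1) (fun t => y (1 - / t)) tau _ _ (Cd_const 1 tau) Dys) as Dg.
    pose proof (Cd_inv (fun t => 1 - y (1 - / t)) tau _ Dg Hgt) as DY.
    pose proof (Cd_mult (fun t => z (1 - / t)) (fun t => 1 - y (1 - / t)) tau _ _ Dzs Dg) as DZ1.
    pose proof (Cd_mult (fun t => z (1 - / t) * (1 - y (1 - / t))) (fun t => 1 - y (1 - / t)) tau _ _ DZ1 Dg) as DZ2.
    pose proof (Cd_mult (fun _ => a2) (fun t => 1 - y (1 - / t)) tau _ _ (Cd_const a2 tau) Dg) as DZ3.
    pose proof (Cd_minus _ _ tau _ _ DZ2 DZ3) as DZ.
    eexists. eexists. split; [exact DY|]. split; [exact DZ|]. cbv beta. split.
    - unfold Yh, Zh. apply inv_y; auto.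
    - unfold Yh, Zh. apply inv_z; auto. }
  destruct (H_unique _ _ _ _ _ _ _ _ _ t0 r rho Hr Hrho Hn Hs Sol) as [du [Hdu U]].
  { unfold Yh. cbv beta. rewrite St0, Hy0. unfold t0 in *. field [Hw]. cbv beta. exact H1t0. }
  { unfold Zh. cbv beta. rewrite St0, Hy0, Hz0. unfold t0. field [Hw]; try exact C3_neq_0. }
  assert (H1t : Cderiv (fun t => 1 - t) t0 (0 - 1)) by (apply (Cd_minus (fun _ => 1) (fun t => t)); [apply Cd_const | apply Cd_id]).
  pose proof (Cd_inv (fun t => 1 - t) t0 _ H1t H1t0) as DT.
  destruct (Cderiv_cont _ t0 _ DT du Hdu) as [dT [HdT HT]].
  destruct (nonzero_near t0 _ _ H1t H1t0) as [dn [Hdn Hnn]].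
  exists (Rmin dT dn). split; [apply Rmin_glb_lt; auto|].
  intros t Ht.
  assert (Ht' : (Cmod (t - t0) < Rmin dT dn)%R) by (unfold t0; replace (t - - (w * w)) with (t + w * w) by ring; exact Ht).
  assert (Hnt : 1 - t <> 0).
  { specialize (Hnn t (Rlt_le_trans _ _ _ Ht' (Rmin_r _ _))). intro X. cbv beta in Hnn. rewrite X, Cmod_0 in Hnn.
    assert (0 < Cmod ((1 - t0)%C))%R by (apply Cmod_gt_0; auto). lra. }
  specialize (HT t (Rlt_le_trans _ _ _ Ht' (Rmin_l _ _))). cbv beta in HT. rewrite Tt0 in HT.
  destruct (U _ HT) as [Uy Uz].
  assert (Ei : 1 - / / (1 - t) = t) by (field; auto).
  assert (Ed : 1 / (1 - t) = / (1 - t)) by (field; auto).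
  rewrite Ed. rewrite Uy, Uz. unfold Yh, Zh. cbv beta. rewrite Ei. split.
  - unfold Cdiv; ring.
  - ring.
Qed.

Theorem proposition3 (w a0 a1 a2 a3 a4 : C) (y z : C -> C) (r : R) :
  w * w * w = 1 -> w <> 1 ->
  a0 + a1 + 2 * a2 + a3 + a4 = 1 ->
  a1 = a3 -> a3 = a4 ->
  (0 < r)%R ->
  solves_H_on a0 a1 a2 a3 a4 y z (- (w * w)) r ->
  y (- (w * w)) = - (w * w) ->
  z (- (w * w)) = (2 * w + 1) / 3 * a2 ->
  (exists (K d : R), (0 < d)%R /\
     forall t : C, (Cmod (t + w * w) < d)%R ->
       (Cmod (y t - (- (w * w) + (1 - a0) * (t + w * w)
                     + (1 + 2 * w) / 3 * a0 * (1 - a0) * ((t + w * w) * (t + w * w))))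
          <= K * Cmod (t + w * w) ^ 3)%R) /\
  (exists (K d : R), (0 < d)%R /\
     forall t : C, (Cmod (t + w * w) < d)%R ->
       (Cmod (z t - ((2 * w + 1) / 3 * a2 - a2 / 3 * (1 - a0) * (t + w * w)))
          <= K * Cmod (t + w * w) ^ 2)%R) /\
  (exists d : R, (0 < d)%R /\
     forall t : C, (Cmod (t + w * w) < d)%R ->
       y (1 / (1 - t)) = 1 / (1 - y t) /\
       z (1 / (1 - t)) = - (1 - y t) * (- z t * (1 - y t) + a2)).

Proof.
  intros Hw3 Hw1 Hsum H13 H34 Hr Hs Hy0 Hz0.
  assert (Hw : w * w = -1 - w).
  { assert (Hm : w - 1 <> 0) by (intro X; apply Hw1; replace w with ((w - 1) + 1) by ring; rewrite X; ring).
    assert (Hp : (w - 1) * (w * w + w + 1) = 0).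
    { replace ((w - 1) * (w * w + w + 1)) with (w * w * w - 1) by ring. rewrite Hw3. ring. }
    assert (Hq : w * w + w + 1 = 0).
    { replace (w * w + w + 1) with (/ (w - 1) * ((w - 1) * (w * w + w + 1))) by (field; exact Hm).
      rewrite Hp. ring. }
    replace (w * w) with ((w * w + w + 1) - w - 1) by ring. rewrite Hq. ring. }
  subst a1. subst a4.
  assert (Ha0 : a0 = 1 - 2 * a2 - 3 * a3) by (rewrite <- Hsum; ring).
  subst a0.
  destruct (taylor w a2 a3 y z r Hw Hr Hs Hy0 Hz0) as [[K1 [d1 [_ [Hd1 T1]]]] [K2 [d2 [_ [Hd2 T2]]]]].
  split; [|split].
  - exists K1, d1. split; auto. intros t Ht.
    assert (E : t - - (w * w) = t + w * w) by ring.
    specialize (T1 t). rewrite E in T1. exact (T1 Ht).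
  - exists K2, d2. split; auto. intros t Ht.
    assert (E : t - - (w * w) = t + w * w) by ring.
    specialize (T2 t). rewrite E in T2. exact (T2 Ht).
  - exact (invariance w a2 a3 y z r Hw Hr Hs Hy0 Hz0).
Qed.
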